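(* Let $x=(x_1,\dots,x_n)$ be variables, $f=(f_1,\dots,f_n)$ differential-free terms such that the ODE $x'=f(x)$ locally evolves $x$ (in every state the value of $f$ is not the zero vector), $P$ a semianalytic formula, and $y=(y_1,\dots,y_n)$ variables fresh in $[x'=f(x)]P$. Then the formula $$[x'=f(x)]P\;\leftrightarrow\;\forall y\,[x'=f(x)\,\&\,P\vee x=y]\Big(x=y\rightarrow P\wedge\langle x'=f(x)\,\&\,P\vee x=y\rangle\, x\neq y\Big)$$ is valid.
   Context: Variables are real-valued; each variable $x$ has a differential variable $x'$. A state is a map from variables to $\mathbb{R}$. Terms are built from variables, rational constants, $+$, $\cdot$ and finitely many fixed function symbols interpreted as $C^\infty$ functions $\mathbb{R}^k\to\mathbb{R}$, evaluated as usual; differential-free terms contain no differential variables. Semianalytic formulas are built from comparisons $e\sim\tilde e$ ($\sim\in\{=,\ge,>\}$) of differential-free terms by $\wedge,\vee,\neg$. For vectors, $x=y$ abbreviates $\bigwedge_i x_i=y_i$, $x\neq y$ its negation, and $\forall y$ quantifies all $y_i$. Semantics of ODEs: $(\omega,\nu)\in[\![x'=f(x)\&Q]\!]$ iff there are $T\ge0$ and $\varphi:[0,T]\to$ states with $\varphi(0)=\omega$ on all variables except $x'$, $\varphi(T)=\nu$, and for all $\zeta\in[0,T]$: $\varphi(\zeta)$ satisfies $x'=f(x)\wedge Q$, $\varphi(\zeta)$ agrees with $\varphi(0)$ on variables other than $x,x'$, and, if $T>0$, $t\mapsto\varphi(t)(x)$ is differentiable at $\zeta$ with derivative $\varphi(\zeta)(x')$.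 $x'=f(x)$ without domain means $Q$ is true. $\omega\models[\alpha]\phi$ iff $\nu\models\phi$ for all $\nu$ with $(\omega,\nu)\in[\![\alpha]\!]$; $\omega\models\langle\alpha\rangle\phi$ iff $\nu\models\phi$ for some such $\nu$. A formula is valid if true in all states. *)

(* Defs.v *)
From Stdlib Require Import Reals Lra List QArith Qreals.
Import ListNotations.
Open Scope R_scope.
Set Implicit Arguments.

Inductive var := Var (i : nat) | DVar (i : nat).

Definition var_eqb (u v : var) : bool :=
  match u, v with
  | Var i, Var j => Nat.eqb i j
  | DVar i, DVar j => Nat.eqb i j
  | _, _ => false
  end.

Definition state := var -> R.

(** * Smooth (C^infinity) functions of k real arguments.
    A k-ary function is represented as g : (nat -> R) -> R depending only on
    the coordinates 0..k-1. *)
Definition upd (v : nat -> R) (i : nat) (a : R) : nat -> R :=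
  fun j => if Nat.eqb j i then a else v j.

Definition depends_only_on (k : nat) (g : (nat -> R) -> R) : Prop :=
  forall v w, (forall i, (i < k)%nat -> v i = w i) -> g v = g w.

Definition continuous_k (k : nat) (g : (nat -> R) -> R) : Prop :=
  forall v eps, 0 < eps -> exists delta, 0 < delta /\
    forall w, (forall i, (i < k)%nat -> Rabs (w i - v i) < delta) ->
      Rabs (g w - g v) < eps.

Definition has_pderiv (g : (nat -> R) -> R) (i : nat) (v : nat -> R) (d : R) : Prop :=
  forall eps, 0 < eps -> exists delta, 0 < delta /\
    forall h, h <> 0 -> Rabs h < delta ->
      Rabs ((g (upd v i (v i + h)) - g v) / h - d) < eps.

Fixpoint Cn (k n : nat) (g : (nat -> R) -> R) : Prop :=
  continuous_k k g /\
  match n with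
  | O => True
  | S m => forall i, (i < k)%nat -> exists dg : (nat -> R) -> R,
             (forall v, has_pderiv g i v (dg v)) /\ Cn k m dg
  end.

Definition smooth_k (k : nat) (g : (nat -> R) -> R) : Prop :=
  depends_only_on k g /\ forall n, Cn k n g.

Section Syntax.
Variable Sym : Type.

Inductive term :=
  | TVar (v : var)
  | TConst (q : Q)
  | TPlus (a b : term)
  | TTimes (a b : term)
  | TFn (s : Sym) (args : list term).

Variable I : Sym -> (nat -> R) -> R.

Fixpoint eval (st : state) (t : term) : R :=
  match t with
  | TVar v => st v
  | TConst q => Q2R q
  | TPlus a b => eval st a + eval st b
  | TTimes a b => eval st a * eval st b
  | TFn s args => I s (fun j => nth j (map (eval st) args) 0)
  end.

Fixpoint dfree (t : term) : bool :=
  match t with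
  | TVar (Var _) => true
  | TVar (DVar _) => false
  | TConst _ => true
  | TPlus a b | TTimes a b => dfree a && dfree b
  | TFn _ args => forallb dfree args
  end.

Fixpoint occurs (v : var) (t : term) : bool :=
  match t with
  | TVar u => var_eqb u v
  | TConst _ => false
  | TPlus a b | TTimes a b => occurs v a || occurs v b
  | TFn _ args => existsb (occurs v) args
  end.

Inductive cmp := CEq | CGe | CGt.

Inductive fml :=
  | FCmp (a : term) (c : cmp) (b : term)
  | FAnd (p q : fml)
  | FOr (p q : fml)
  | FNot (p : fml).

Fixpoint semianalytic (p : fml) : bool :=
  match p with
  | FCmp a _ b => dfree a && dfree b
  | FAnd p q | FOr p q => semianalytic p && semianalytic q
  | FNot p => semianalytic p
  end.

Fixpoint occurs_fml (v : var) (p : fml) : bool :=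
  match p with
  | FCmp a _ b => occurs v a || occurs v b
  | FAnd p q | FOr p q => occurs_fml v p || occurs_fml v q
  | FNot p => occurs_fml v p
  end.

Fixpoint holds (st : state) (p : fml) : Prop :=
  match p with
  | FCmp a CEq b => eval st a = eval st b
  | FCmp a CGe b => eval st a >= eval st b
  | FCmp a CGt b => eval st a > eval st b
  | FAnd p q => holds st p /\ holds st q
  | FOr p q => holds st p \/ holds st q
  | FNot p => ~ holds st p
  end.

(** * ODE semantics: [x' = f(x) & Q] with xs the variable vector (indices)
    and fs the right-hand sides. *)
Definition in_xs (xs : list nat) (v : var) : Prop :=
  exists i, In i xs /\ (v = Var i \/ v = DVar i).

Definition is_dvar_of (xs : list nat) (v : var) : Prop :=
  exists i, In i xs /\ v = DVar i.

Definition deriv_within (T : R) (g : R -> R) (zeta d : R) : Prop :=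
  forall eps, 0 < eps -> exists delta, 0 < delta /\
    forall t, 0 <= t <= T -> t <> zeta -> Rabs (t - zeta) < delta ->
      Rabs ((g t - g zeta) / (t - zeta) - d) < eps.

Definition ode_rel (xs : list nat) (fs : list term) (Q : state -> Prop)
  (omega nu : state) : Prop :=
  exists (T : R) (phi : R -> state),
    0 <= T /\
    (forall v, ~ is_dvar_of xs v -> phi 0 v = omega v) /\
    phi T = nu /\
    forall zeta, 0 <= zeta <= T ->
      (forall k, (k < length xs)%nat ->
         phi zeta (DVar (nth k xs O)) = eval (phi zeta) (nth k fs (TConst 0%Q))) /\
      Q (phi zeta) /\
      (forall v, ~ in_xs xs v -> phi zeta v = phi 0 v) /\
      (0 < T -> forall k, (k < length xs)%nat ->
         deriv_within T (fun t => phi t (Var (nth k xs O))) zeta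
                        (phi zeta (DVar (nth k xs O)))).

Definition box (rel : state -> state -> Prop) (post : state -> Prop) (omega : state) : Prop :=
  forall nu, rel omega nu -> post nu.

Definition diamond (rel : state -> state -> Prop) (post : state -> Prop) (omega : state) : Prop :=
  exists nu, rel omega nu /\ post nu.

Definition vec_eq (st : state) (xs ys : list nat) : Prop :=
  forall k, (k < length xs)%nat -> st (Var (nth k xs O)) = st (Var (nth k ys O)).

Fixpoint assign (st : state) (ys : list nat) (a : nat -> R) : state :=
  match ys with
  | [] => st
  | y :: ys' => fun v => if var_eqb v (Var y) then a O
                         else assign st ys' (fun k => a (S k)) v
  end.

End Syntax.

(* Main.v *)
From Stdlib Require Import Reals Lra Lia List FunctionalExtensionality QArith FinFun.
From Coquelicot Require Import Coquelicot.
Require Import Defs.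
From Stdlib Require Import Reals List QArith.
Import ListNotations.
Open Scope R_scope.


Lemma abs_lt_iff x y : Rabs x < y <-> -y < x < y.
Proof. split_Rabs; split; intros; lra. Qed.
Lemma abs_le_iff x y : Rabs x <= y <-> -y <= x <= y.
Proof. split_Rabs; split; intros; lra. Qed.

Fixpoint dsum (n : nat) (f : nat -> R) : R :=
  match n with O => 0 | S m => dsum m f + f m end.

Definition vdist n (z w : nat -> R) := dsum n (fun j => Rabs (z j - w j)).
Definition vnear n (z z0 : nat -> R) r := forall j, (j < n)%nat -> Rabs (z j - z0 j) < r.

Lemma dsum_ext n f g : (forall i, (i < n)%nat -> f i = g i) -> dsum n f = dsum n g.
Proof. induction n; simpl; intros H; auto. rewrite IHn by (intros; apply H; lia). rewrite H by lia; auto. Qed.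

Lemma dsum_le n f g : (forall i, (i < n)%nat -> f i <= g i) -> dsum n f <= dsum n g.
Proof. induction n; simpl; intros H; [lra|]. pose proof (H n ltac:(lia)). pose proof (IHn ltac:(intros; apply H; lia)). lra. Qed.

Lemma dsum_ge0 n f : (forall i, (i < n)%nat -> 0 <= f i) -> 0 <= dsum n f.
Proof. intros H. replace 0 with (dsum n (fun _ => 0)). apply dsum_le; auto.
 induction n; simpl; auto. rewrite IHn; [lra|intros; apply H; lia]. Qed.

Lemma dsum_const_le n f c : (forall i, (i < n)%nat -> f i <= c) -> dsum n f <= INR n * c.
Proof. induction n; cbn [dsum]; intros H; [simpl; lra|]. rewrite S_INR. pose proof (H n ltac:(lia)). pose proof (IHn ltac:(intros; apply H; lia)). lra. Qed.

Lemma dsum_term n f k : (forall i, (i < n)%nat -> 0 <= f i) -> (k < n)%nat -> f k <= dsum n f.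
Proof. induction n; simpl; intros H Hk; [lia|].
 assert (0 <= dsum n f) by (apply dsum_ge0; intros; apply H; lia).
 destruct (Nat.eq_dec k n). subst. lra. pose proof (H n ltac:(lia)). assert (f k <= dsum n f) by (apply IHn; [intros; apply H; lia| lia]). lra. Qed.

Lemma dsum_scal n c f : dsum n (fun i => c * f i) = c * dsum n f.
Proof. induction n; simpl; [ring|]. rewrite IHn; ring. Qed.

Lemma dsum_plus n f g : dsum n (fun i => f i + g i) = dsum n f + dsum n g.
Proof. induction n; simpl; [ring|]. rewrite IHn; ring. Qed.

Lemma vdist_ge0 n z w : 0 <= vdist n z w.
Proof. apply dsum_ge0; intros; apply Rabs_pos. Qed.

Lemma vdist_coord n z w k : (k < n)%nat -> Rabs (z k - w k) <= vdist n z w.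
Proof. intros; apply (dsum_term n (fun j => Rabs (z j - w j))); auto; intros; apply Rabs_pos. Qed.

Lemma vdist_near n z z0 r : vnear n z z0 r -> vdist n z z0 <= INR n * r.
Proof. intros H. apply dsum_const_le. intros i Hi. left. apply H; auto. Qed.

Lemma vnear_mono n z z0 r r' : r <= r' -> vnear n z z0 r -> vnear n z z0 r'.
Proof. intros Hr H j Hj. specialize (H j Hj). lra. Qed.

Lemma fin_combine (n:nat) (P : nat -> R -> R -> Prop) :
 (forall i r r' L L', r' <= r -> L <= L' -> 0 < r' -> P i r L -> P i r' L') ->
 (forall i, (i<n)%nat -> exists r L, 0 < r /\ 0 <= L /\ P i r L) ->
 exists r L, 0 < r /\ 0 <= L /\ forall i, (i<n)%nat -> P i r L.
Proof.
 intros Hm. induction n; intros H.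
 - exists 1, 0. repeat split; try lra. intros; lia.
 - destruct IHn as (r & L & Hr & HL & HP). intros; apply H; lia.
   destruct (H n ltac:(lia)) as (r1 & L1 & Hr1 & HL1 & HP1).
   exists (Rmin r r1), (Rmax L L1). repeat split.
   + apply Rmin_pos; auto.
   + apply Rle_trans with L; auto; apply Rmax_l.
   + intros i Hi. destruct (Nat.eq_dec i n).
     * subst. eapply Hm; [apply Rmin_r|apply Rmax_r|apply Rmin_pos; auto|auto].
     * eapply Hm; [apply Rmin_l|apply Rmax_l|apply Rmin_pos; auto|apply HP; lia].
Qed.

Lemma fin_combine1 (n:nat) (P : nat -> R -> Prop) :
 (forall i r r', r' <= r -> 0 < r' -> P i r -> P i r') ->
 (forall i, (i<n)%nat -> exists r, 0 < r /\ P i r) ->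
 exists r, 0 < r /\ forall i, (i<n)%nat -> P i r.
Proof.
 intros Hm H. destruct (fin_combine n (fun i r _ => P i r)) as (r & L & Hr & _ & HP).
 - intros. eapply Hm; eauto.
 - intros i Hi. destruct (H i Hi) as (r & Hr & HP). exists r, 0. repeat split; auto; lra.
 - exists r; auto.
Qed.

Lemma half_pow_pos m : 0 < (/2)^m.
Proof. apply pow_lt; lra. Qed.

Lemma zero_of_geo x K : 0 <= x -> (forall j, x <= K * (/2)^j) -> x = 0.
Proof.
 intros Hx H. destruct (Req_dec x 0); auto. exfalso.
 assert (HK : 0 <= K). { specialize (H O). simpl in H. lra. }
 destruct (pow_lt_1_zero (/2) ltac:(rewrite Rabs_pos_eq; lra) (x / (K+1))) as [N HN].
 { apply Rdiv_lt_0_compat; lra. }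
 specialize (HN N (le_n _)). rewrite Rabs_pos_eq in HN by (left; apply half_pow_pos).
 specialize (H N). pose proof (half_pow_pos N).
 apply Rmult_lt_compat_l with (r := K+1) in HN; [|lra].
 replace ((K+1) * (x / (K+1))) with x in HN by (field; lra). nra.
Qed.

Lemma geo_cauchy (u : nat -> R) C : 0 <= C ->
  (forall m, Rabs (u (S m) - u m) <= C * (/2)^m) ->
  forall m d, Rabs (u (m + d)%nat - u m) <= 2 * C * (/2)^m - 2 * C * (/2)^(m+d).
Proof.
 intros HC H m d. induction d.
 - rewrite Nat.add_0_r. replace (u m - u m) with 0 by ring. rewrite Rabs_R0. lra.
 - replace (m + S d)%nat with (S (m + d)) by lia. specialize (H (m+d)%nat).
   simpl pow. pose proof (Rabs_triang (u (S (m + d)) - u (m + d)%nat) (u (m + d)%nat - u m)).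
   replace (u (S (m + d)) - u (m + d)%nat + (u (m + d)%nat - u m)) with (u (S (m + d)) - u m) in H0 by ring.
   lra.
Qed.

Lemma geo_cauchy' (u : nat -> R) C : 0 <= C ->
  (forall m, Rabs (u (S m) - u m) <= C * (/2)^m) ->
  forall m p, (m <= p)%nat -> Rabs (u p - u m) <= 2 * C * (/2)^m.
Proof.
 intros HC H m p Hp. replace p with (m + (p - m))%nat by lia.
 pose proof (geo_cauchy u C HC H m (p - m)). pose proof (half_pow_pos (m + (p-m))). nra.
Qed.

Definition slim (u : nat -> R) : R := real (Lim_seq u).

Lemma geo_lim (u : nat -> R) C : 0 <= C ->
  (forall m, Rabs (u (S m) - u m) <= C * (/2)^m) ->
  is_lim_seq u (slim u) /\ forall m, Rabs (slim u - u m) <= 2 * C * (/2)^m.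
Proof.
 intros HC H.
 assert (Hc : ex_lim_seq_cauchy u).
 { intros [eps Heps]. simpl.
   destruct (pow_lt_1_zero (/2) ltac:(rewrite Rabs_pos_eq; lra) (eps / (4 * C + 1))) as [N HN].
   { apply Rdiv_lt_0_compat; lra. }
   exists N. intros n m Hn Hm.
   pose proof (HN N (le_n _)) as HN'. rewrite Rabs_pos_eq in HN' by (left; apply half_pow_pos).
   assert (E1 := geo_cauchy' u C HC H N n Hn). assert (E2 := geo_cauchy' u C HC H N m Hm).
   pose proof (Rabs_triang (u n - u N) (u N - u m)). rewrite Rabs_minus_sym in E2.
   replace (u n - u N + (u N - u m)) with (u n - u m) in H0 by ring.
   assert (4 * C * (/2)^N < eps).
   { apply Rmult_lt_compat_l with (r := 4*C+1) in HN'; [|lra].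
     replace ((4*C+1) * (eps / (4*C+1))) with eps in HN' by (field; lra).
     pose proof (half_pow_pos N). nra. }
   lra. }
 apply ex_lim_seq_cauchy_corr in Hc. apply Lim_seq_correct' in Hc.
 split. exact Hc.
 intros m. apply is_lim_seq_Reals in Hc. unfold slim.
 set (l := real (Lim_seq u)) in *.
 destruct (Rle_dec (Rabs (l - u m)) (2 * C * (/2)^m)) as [|Hn]; auto. exfalso.
 set (e := Rabs (l - u m) - 2 * C * (/2)^m).
 destruct (Hc e) as [N HN]. unfold e; lra.
 specialize (HN (Nat.max N m) ltac:(lia)). unfold R_dist in HN.
 pose proof (geo_cauchy' u C HC H m (Nat.max N m) ltac:(lia)).
 pose proof (Rabs_triang (l - u (Nat.max N m)) (u (Nat.max N m) - u m)).
 replace (l - u (Nat.max N m) + (u (Nat.max N m) - u m)) with (l - u m) in H1 by ring.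
 rewrite Rabs_minus_sym in HN. unfold e in HN. lra.
Qed.


Definition clamp (T t : R) := Rmax 0 (Rmin T t).

Lemma clamp_in T t : 0 <= T -> 0 <= clamp T t <= T.
Proof. intros; unfold clamp, Rmax, Rmin; repeat destruct Rle_dec; lra. Qed.
Lemma clamp_id T t : 0 <= t <= T -> clamp T t = t.
Proof. intros; unfold clamp, Rmax, Rmin; repeat destruct Rle_dec; lra. Qed.
Lemma clamp_lip T t t' : 0 <= T -> Rabs (clamp T t - clamp T t') <= Rabs (t - t').
Proof. intros; unfold clamp, Rmax, Rmin; repeat destruct Rle_dec; split_Rabs; lra. Qed.

Lemma dw_cont T g x d : deriv_within T g x d -> 0 <= x <= T ->
  forall eps, 0 < eps -> exists del, 0 < del /\ forall y, 0 <= y <= T -> Rabs (y - x) < del -> Rabs (g y - g x) < eps.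
Proof.
 intros H Hx eps Heps. destruct (H 1 ltac:(lra)) as (d1 & Hd1 & H1).
 exists (Rmin d1 (eps / (Rabs d + 2))). split.
 { apply Rmin_pos; auto. apply Rdiv_lt_0_compat; auto. pose proof (Rabs_pos d); lra. }
 intros y Hy Hyx. destruct (Req_dec y x). { subst. replace (g x - g x) with 0 by ring. rewrite Rabs_R0; lra. }
 assert (Hm1 := Rmin_l d1 (eps / (Rabs d + 2))). assert (Hm2 := Rmin_r d1 (eps / (Rabs d + 2))).
 specialize (H1 y Hy H0 ltac:(lra)).
 assert (Hyx0 : y - x <> 0) by lra.
 replace (g y - g x) with (((g y - g x) / (y - x) - d) * (y - x) + d * (y - x)) by (field; auto).
 pose proof (Rabs_triang (((g y - g x) / (y - x) - d) * (y - x)) (d * (y - x))).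
 rewrite !Rabs_mult in H2. pose proof (Rabs_pos (y - x)). pose proof (Rabs_pos d).
 assert (Rabs (y - x) * (Rabs d + 2) < eps).
 { apply Rlt_le_trans with (eps / (Rabs d + 2) * (Rabs d + 2)). apply Rmult_lt_compat_r; lra.
   right; field; lra. }
 nra.
Qed.

Lemma dw_restrict T T' g x d : deriv_within T g x d -> T' <= T -> deriv_within T' g x d.
Proof. intros H HT eps He. destruct (H eps He) as (del & Hd & H1). exists del; split; auto.
 intros t Ht. apply H1; lra. Qed.

Lemma dw_ext T g h x d : (forall t, 0 <= t <= T -> g t = h t) -> 0 <= x <= T ->
  deriv_within T g x d -> deriv_within T h x d.
Proof. intros E Hx H eps He. destruct (H eps He) as (del & Hd & H1). exists del; split; auto.
 intros t Ht Htx Htd. rewrite <- !E by auto. auto. Qed.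

Lemma dw_minus T g h x a b : deriv_within T g x a -> deriv_within T h x b ->
  deriv_within T (fun t => g t - h t) x (a - b).
Proof. intros H1 H2 eps He. destruct (H1 (eps/2) ltac:(lra)) as (d1 & Hd1 & K1).
 destruct (H2 (eps/2) ltac:(lra)) as (d2 & Hd2 & K2). exists (Rmin d1 d2). split. apply Rmin_pos; auto.
 intros t Ht Htx Htd. assert (Hm1 := Rmin_l d1 d2). assert (Hm2 := Rmin_r d1 d2).
 specialize (K1 t Ht Htx ltac:(lra)). specialize (K2 t Ht Htx ltac:(lra)).
 assert (t - x <> 0) by lra.
 replace ((g t - h t - (g x - h x)) / (t - x) - (a - b)) with (((g t - g x) / (t - x) - a) - ((h t - h x) / (t - x) - b)) by (field; auto).
 pose proof (Rabs_triang ((g t - g x) / (t - x) - a) (- ((h t - h x) / (t - x) - b))). rewrite Rabs_Ropp in H0. 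
 replace (- ((h t - h x) / (t - x) - b)) with (-1 * ((h t - h x) / (t - x) - b)) in H0 by ring.
 replace (((g t - g x) / (t - x) - a) - ((h t - h x) / (t - x) - b)) with (((g t - g x) / (t - x) - a) + -1 * ((h t - h x) / (t - x) - b)) by ring. lra.
Qed.

Lemma dw_shift T g s u d : 0 <= s -> deriv_within T g (s + u) d ->
  deriv_within (T - s) (fun u => g (s + u)) u d.
Proof. intros Hs H eps He. destruct (H eps He) as (del & Hd & H1). exists del; split; auto.
 intros t Ht Htu Htd. specialize (H1 (s + t) ltac:(lra) ltac:(lra) ltac:(replace (s + t - (s + u)) with (t - u) by ring; auto)).
 replace (s + t - (s + u)) with (t - u) in H1 by ring. auto. Qed.

Lemma cont_bridge f x : (forall eps, 0 < eps -> exists del, 0 < del /\ forall y, Rabs (y - x) < del -> Rabs (f y - f x) < eps) -> continuity_pt f x.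
Proof. intros H eps He. destruct (H eps He) as (del & Hd & H1). exists del; split; auto.
 intros y [_ Hy]. simpl in *. unfold R_dist in *. auto. Qed.

Lemma mvi h g g' K : 0 < h -> (forall s, 0 <= s <= h -> deriv_within h g s (g' s)) ->
  (forall s, 0 <= s <= h -> Rabs (g' s) <= K) -> forall t, 0 <= t <= h -> Rabs (g t - g 0) <= K * t.
Proof.
 intros Hh Hd HK t Ht. destruct (Req_dec t 0). { subst. replace (g 0 - g 0) with 0 by ring. rewrite Rabs_R0. lra. }
 set (gh := fun y => g (clamp h y)).
 destruct (MVT_gen gh 0 t g') as (c & Hc & E).
 - rewrite Rmin_left, Rmax_right by lra. intros x Hx. apply is_derive_Reals.
   intros eps He. destruct (Hd x ltac:(lra) eps He) as (del & Hdel & H1).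
   assert (Hp : 0 < Rmin del (Rmin x (h - x))) by (repeat apply Rmin_pos; lra).
   exists (mkposreal _ Hp). intros hh Hhh Hha. simpl in Hha.
   assert (Hm1 := Rmin_l del (Rmin x (h - x))). assert (Hm2 := Rmin_r del (Rmin x (h - x))).
   assert (Hm3 := Rmin_l x (h - x)). assert (Hm4 := Rmin_r x (h - x)).
   apply abs_lt_iff in Hha as Hha'.
   unfold gh. rewrite !clamp_id by lra.
   specialize (H1 (x + hh) ltac:(lra) ltac:(lra) ltac:(replace (x + hh - x) with hh by ring; lra)).
   replace (x + hh - x) with hh in H1 by ring. auto.
 - rewrite Rmin_left, Rmax_right by lra. intros x Hx. apply cont_bridge. intros eps He.
   destruct (dw_cont h g x (g' x) (Hd x ltac:(lra)) ltac:(lra) eps He) as (del & Hdel & H1).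
   exists del; split; auto. intros y Hy. unfold gh. rewrite (clamp_id h x) by lra.
   apply H1. apply clamp_in; lra. pose proof (clamp_lip h y x ltac:(lra)) as HL. rewrite (clamp_id h x) in HL by lra. lra.
 - rewrite Rmin_left, Rmax_right in Hc by lra. unfold gh in E. rewrite !clamp_id in E by lra.
   rewrite E, Rabs_mult, Rminus_0_r, (Rabs_pos_eq t) by lra. specialize (HK c ltac:(lra)). nra.
Qed.


Lemma ex_RInt_all (g : R -> R) a b : (forall s, continuous g s) -> ex_RInt g a b.
Proof. intros H. apply (@ex_RInt_continuous R_CompleteNormedModule). intros; apply H. Qed.

Lemma rint_diff (g : R -> R) B a b c : (forall s, continuous g s) -> (forall s, Rabs (g s) <= B) ->
  Rabs (RInt g a b - RInt g a c) <= B * Rabs (b - c).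
Proof.
 intros Hc HB. pose proof (RInt_Chasles g a c b (ex_RInt_all g a c Hc) (ex_RInt_all g c b Hc)) as E.
 change (RInt g a c + RInt g c b = RInt g a b) in E.
 replace (RInt g a b - RInt g a c) with (RInt g c b) by lra.
 destruct (Rle_dec c b).
 - rewrite (Rabs_pos_eq (b - c)) by lra. rewrite Rmult_comm. apply abs_RInt_le_const; auto. apply ex_RInt_all; auto.
 - rewrite <- (opp_RInt_swap g b c) by (apply ex_RInt_all; auto). change (Rabs (- RInt g b c) <= B * Rabs (b - c)).
   rewrite Rabs_Ropp, Rabs_minus_sym, (Rabs_pos_eq (c - b)) by lra. rewrite Rmult_comm. apply abs_RInt_le_const; auto. lra. apply ex_RInt_all; auto.
Qed.

Lemma rint_bound (g : R -> R) B c : (forall s, continuous g s) -> (forall s, Rabs (g s) <= B) ->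
  Rabs (RInt g 0 c) <= B * Rabs c.
Proof. intros. pose proof (rint_diff g B 0 c 0 H H0). rewrite RInt_point in H1. change (zero : R) with 0 in H1.
 rewrite !Rminus_0_r in H1. auto. Qed.

Lemma rint_minus (f g : R -> R) a b : (forall s, continuous f s) -> (forall s, continuous g s) ->
  RInt (fun s => f s - g s) a b = RInt f a b - RInt g a b.
Proof. intros. apply (RInt_minus f g a b); apply ex_RInt_all; auto. Qed.

Definition LLv n (G : (nat -> R) -> nat -> R) := forall z0, exists r L, 0 < r /\ 0 <= L /\
  forall z w, vnear n z z0 r -> vnear n w z0 r -> forall k, (k < n)%nat -> Rabs (G z k - G w k) <= L * vdist n z w.

Lemma LLv_cont n G (HG : LLv n G) (zf : R -> nat -> R) Mz s :
  0 <= Mz -> (forall t k, (k < n)%nat -> Rabs (zf t k - zf s k) <= Mz * Rabs (t - s)) ->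
  forall k, (k < n)%nat -> continuous (fun t => G (zf t) k) s.
Proof.
 intros HMz Hz k Hk. apply continuity_pt_filterlim. apply cont_bridge. intros eps He.
 destruct (HG (zf s)) as (r & L & Hr & HL & H).
 set (c := L * INR n * Mz + 1). assert (0 < c) by (unfold c; pose proof (pos_INR n); assert (0 <= L * INR n * Mz) by (apply Rmult_le_pos; [apply Rmult_le_pos|]; auto); lra).
 exists (Rmin (r / (Mz + 1)) (eps / c)). split. apply Rmin_pos; apply Rdiv_lt_0_compat; lra.
 intros y Hy. assert (Hm1 := Rmin_l (r / (Mz + 1)) (eps / c)). assert (Hm2 := Rmin_r (r / (Mz + 1)) (eps / c)).
 assert (Hn : vnear n (zf y) (zf s) r).
 { intros j Hj. specialize (Hz y j Hj). apply Rle_lt_trans with (Mz * Rabs (y - s)); auto.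
   apply Rle_lt_trans with ((Mz + 1) * Rabs (y - s)). pose proof (Rabs_pos (y - s)). nra.
   apply Rlt_le_trans with ((Mz+1) * (r/(Mz+1))). apply Rmult_lt_compat_l; lra. right; field; lra. }
 assert (Hn0 : vnear n (zf s) (zf s) r). { intros j _. replace (zf s j - zf s j) with 0 by ring. rewrite Rabs_R0; auto. }
 specialize (H _ _ Hn Hn0 k Hk).
 assert (vdist n (zf y) (zf s) <= INR n * (Mz * Rabs (y - s))). { apply dsum_const_le. intros; apply Hz; auto. }
 apply Rle_lt_trans with (L * vdist n (zf y) (zf s)); auto.
 apply Rle_lt_trans with (L * (INR n * (Mz * Rabs (y - s)))). apply Rmult_le_compat_l; auto.
 apply Rle_lt_trans with (c * Rabs (y - s)). unfold c. pose proof (Rabs_pos (y - s)). nra.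
 apply Rlt_le_trans with (c * (eps / c)). apply Rmult_lt_compat_l; lra. right; field; lra.
Qed.

Fixpoint it n (G : (nat -> R) -> nat -> R) (z0 : nat -> R) T (m : nat) : R -> nat -> R :=
  match m with
  | O => fun _ k => z0 k
  | S m' => fun t k => if (k <? n)%nat then z0 k + RInt (fun s => G (it n G z0 T m' s) k) 0 (clamp T t) else z0 k
  end.

Lemma cont_minus (f g : R -> R) x : continuous f x -> continuous g x -> continuous (fun y => f y - g y) x.
Proof. intros H1 H2. apply continuity_pt_filterlim. apply continuity_pt_minus; apply continuity_pt_filterlim; auto. Qed.

Lemma addK (a b : R) : a + b - a = b. Proof. ring. Qed.
Lemma addK2 (a b c : R) : a + b - (a + c) = b - c. Proof. ring. Qed.

Lemma le_of_geo x a K : (forall m, x <= a + K * (/2)^m) -> x <= a.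
Proof. intros H. destruct (Rle_dec x a) as [|Hn]; auto. exfalso.
 assert (x - a = 0). { apply zero_of_geo with K. lra. intros j; specialize (H j); lra. } lra. Qed.

Lemma ode_exists n G z0 : LLv n G -> exists T z, 0 < T /\ (forall k, z 0 k = z0 k) /\
  forall t, 0 <= t <= T -> forall k, (k < n)%nat -> deriv_within T (fun t => z t k) t (G (z t) k).
Proof.
 intros HG. destruct (HG z0) as (r & L & Hr & HL & HLL).
 set (S0 := dsum n (fun k => Rabs (G z0 k))).
 assert (HS0 : 0 <= S0) by (apply dsum_ge0; intros; apply Rabs_pos).
 pose proof (pos_INR n) as Hn.
 set (M := S0 + L * INR n * r + 1).
 assert (HM : 1 <= M) by (unfold M; assert (0 <= L * INR n * r) by (apply Rmult_le_pos; [apply Rmult_le_pos|]; lra); lra).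
 assert (Gb : forall z, vnear n z z0 r -> forall k, (k < n)%nat -> Rabs (G z k) <= M).
 { intros z Hz k Hk. assert (Hz0 : vnear n z0 z0 r) by (intros j _; replace (z0 j - z0 j) with 0 by ring; rewrite Rabs_R0; auto).
   specialize (HLL z z0 Hz Hz0 k Hk). pose proof (vdist_near n z z0 r Hz).
   pose proof (dsum_term n (fun k => Rabs (G z0 k)) k ltac:(intros; apply Rabs_pos) Hk). simpl in H0. fold S0 in H0.
   pose proof (Rabs_triang (G z k - G z0 k) (G z0 k)). replace (G z k - G z0 k + G z0 k) with (G z k) in H1 by ring.
   unfold M. assert (L * vdist n z z0 <= L * (INR n * r)) by (apply Rmult_le_compat_l; auto). nra. }
 set (T := Rmin (r / (2 * M)) (/ (2 * (L * INR n + 1)))).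
 assert (HLn : 0 <= L * INR n) by (apply Rmult_le_pos; lra).
 assert (HT : 0 < T) by (apply Rmin_pos; [apply Rdiv_lt_0_compat; lra| apply Rinv_0_lt_compat; lra]).
 assert (HMT : M * T <= r / 2).
 { apply Rle_trans with (M * (r / (2 * M))). apply Rmult_le_compat_l; [lra|apply Rmin_l]. right; field; lra. }
 assert (HTL : T * (L * INR n) <= / 2).
 { apply Rle_trans with (/ (2 * (L * INR n + 1)) * (L * INR n + 1)).
   apply Rmult_le_compat; try lra. apply Rmin_r. right; field; lra. }
 set (z_ := it n G z0 T).
 assert (Inv : forall m, (forall t k, (k < n)%nat -> Rabs (z_ m t k - z0 k) <= M * T) /\
    (forall t t' k, (k < n)%nat -> Rabs (z_ m t k - z_ m t' k) <= M * Rabs (t - t')) /\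
    (forall t k, (n <= k)%nat -> z_ m t k = z0 k)).
 { induction m.
   - unfold z_; simpl. split; [|split]; intros; try reflexivity.
     replace (z0 k - z0 k) with 0 by ring; rewrite Rabs_R0; nra.
     replace (z0 k - z0 k) with 0 by ring; rewrite Rabs_R0; pose proof (Rabs_pos (t - t')); nra.
   - destruct IHm as (I1 & I2 & I3).
     assert (Nr : forall t, vnear n (z_ m t) z0 r) by (intros t j Hj; specialize (I1 t j Hj); lra).
     assert (Ct : forall k, (k < n)%nat -> forall s, continuous (fun s => G (z_ m s) k) s).
     { intros k Hk s. apply (LLv_cont n G HG (z_ m) M s); auto; lra. }
     assert (Bd : forall k, (k < n)%nat -> forall s, Rabs (G (z_ m s) k) <= M) by (intros; apply Gb; auto).
     split; [|split].
     + intros t k Hk. unfold z_; simpl; fold z_. destruct (Nat.ltb_spec k n); [|lia].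
       rewrite addK.
       eapply Rle_trans. apply rint_bound; auto. pose proof (clamp_in T t ltac:(lra)). rewrite Rabs_pos_eq by lra. nra.
     + intros t t' k Hk. unfold z_; simpl; fold z_. destruct (Nat.ltb_spec k n); [|lia].
       rewrite addK2.
       eapply Rle_trans. apply rint_diff; auto. apply Rmult_le_compat_l. lra. apply clamp_lip; lra.
     + intros t k Hk. unfold z_; simpl. destruct (Nat.ltb_spec k n); [lia|auto]. }
 assert (it_S : forall m t k, z_ (S m) t k = if (k <? n)%nat then z0 k + RInt (fun s => G (z_ m s) k) 0 (clamp T t) else z0 k) by reflexivity.
 assert (Nr : forall m t, vnear n (z_ m t) z0 r).
 { intros m t j Hj. destruct (Inv m) as (I1 & _). specialize (I1 t j Hj). lra. }
 assert (Ct : forall m k, (k < n)%nat -> forall s, continuous (fun s => G (z_ m s) k) s).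
 { intros m k Hk s. destruct (Inv m) as (_ & I2 & _). apply (LLv_cont n G HG (z_ m) M s); auto; lra. }
 set (C := M * T). assert (HC : 0 <= C) by (unfold C; nra).
 assert (Dm : forall m t k, (k < n)%nat -> Rabs (z_ (S m) t k - z_ m t k) <= C * (/2)^m).
 { induction m; intros t k Hk.
   - simpl pow. rewrite Rmult_1_r. change (z_ 0%nat t k) with (z0 k). apply (proj1 (Inv 1%nat)); auto.
   - rewrite !it_S. destruct (Nat.ltb_spec k n); [|lia]. rewrite addK2.
     rewrite <- rint_minus by (apply Ct; auto).
     assert (Hb : forall s, Rabs (G (z_ (S m) s) k - G (z_ m s) k) <= L * (INR n * (C * (/2)^m))).
     { intros s. eapply Rle_trans. apply HLL; auto. apply Rmult_le_compat_l; auto.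
       apply dsum_const_le. intros j Hj. apply IHm; auto. }
     eapply Rle_trans. apply rint_bound; [|exact Hb].
     { intros s0. apply cont_minus; apply Ct; auto. }
     pose proof (clamp_in T t ltac:(lra)). rewrite (Rabs_pos_eq (clamp T t)) by lra.
     pose proof (half_pow_pos m). simpl pow.
     assert (0 <= L * (INR n * (C * (/ 2) ^ m))) by (apply Rmult_le_pos; auto; apply Rmult_le_pos; auto; apply Rmult_le_pos; lra).
     apply Rle_trans with (L * (INR n * (C * (/ 2) ^ m)) * T). apply Rmult_le_compat_l; lra.
     replace (L * (INR n * (C * (/ 2) ^ m)) * T) with ((T * (L * INR n)) * (C * (/2)^m)) by ring.
     assert (0 <= C * (/2)^m) by nra. nra. }
 assert (GL : forall t k, (k < n)%nat -> is_lim_seq (fun m => z_ m t k) (slim (fun m => z_ m t k)) /\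
            forall m, Rabs (slim (fun m => z_ m t k) - z_ m t k) <= 2 * C * (/2)^m).
 { intros t k Hk. apply geo_lim; auto. }
 set (z := fun t k => slim (fun m => z_ m t k)).
 assert (Z1 : forall t k, (k < n)%nat -> forall m, Rabs (z t k - z_ m t k) <= 2 * C * (/2)^m).
 { intros t k Hk. apply GL; auto. }
 assert (Z3 : forall t t' k, (k < n)%nat -> Rabs (z t k - z t' k) <= M * Rabs (t - t')).
 { intros t t' k Hk. apply le_of_geo with (4 * C). intros m.
   pose proof (Z1 t k Hk m). pose proof (Z1 t' k Hk m). destruct (Inv m) as (_ & I2 & _). specialize (I2 t t' k Hk).
   pose proof (Rabs_triang (z t k - z_ m t k) (z_ m t k - z t' k)).
   pose proof (Rabs_triang (z_ m t k - z_ m t' k) (z_ m t' k - z t' k)).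
   rewrite (Rabs_minus_sym (z_ m t' k)) in H2.
   replace (z t k - z_ m t k + (z_ m t k - z t' k)) with (z t k - z t' k) in H1 by ring.
   replace (z_ m t k - z_ m t' k + (z_ m t' k - z t' k)) with (z_ m t k - z t' k) in H2 by ring. lra. }
 assert (Z4 : forall t k, (k < n)%nat -> Rabs (z t k - z0 k) <= M * T).
 { intros t k Hk. apply le_of_geo with (2 * C). intros m.
   pose proof (Z1 t k Hk m). destruct (Inv m) as (I1 & _). specialize (I1 t k Hk).
   pose proof (Rabs_triang (z t k - z_ m t k) (z_ m t k - z0 k)) as HT3.
   replace (z t k - z_ m t k + (z_ m t k - z0 k)) with (z t k - z0 k) in HT3 by ring. lra. }
 assert (Nz : forall t, vnear n (z t) z0 r) by (intros t j Hj; specialize (Z4 t j Hj); lra).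
 assert (Cz : forall k, (k < n)%nat -> forall s, continuous (fun s => G (z s) k) s).
 { intros k Hk s. apply (LLv_cont n G HG z M s); auto; lra. }
 assert (Z6 : forall t k, (k < n)%nat -> z t k = z0 k + RInt (fun s => G (z s) k) 0 (clamp T t)).
 { intros t k Hk. 
   assert (E : z t k - (z0 k + RInt (fun s => G (z s) k) 0 (clamp T t)) = 0); [|lra].
   apply Rabs_eq_0. apply zero_of_geo with (C + T * (L * INR n) * 2 * C * 2). apply Rabs_pos. intros m.
   pose proof (Z1 t k Hk (S m)). rewrite it_S in H. destruct (Nat.ltb_spec k n); [|lia].
   assert (Hb : forall s, Rabs (G (z s) k - G (z_ m s) k) <= L * (INR n * (2 * C * (/2)^m))).
   { intros s. eapply Rle_trans. apply HLL; auto. apply Rmult_le_compat_l; auto.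
     apply dsum_const_le. intros j Hj. apply Z1; auto. }
   pose proof (rint_bound _ _ (clamp T t) (fun s0 => cont_minus _ _ s0 (Cz k Hk s0) (Ct m k Hk s0)) Hb) as Hi.
   rewrite rint_minus in Hi by (try apply Cz; try apply Ct; auto).
   pose proof (clamp_in T t ltac:(lra)). rewrite (Rabs_pos_eq (clamp T t)) in Hi by lra.
   set (I1 := RInt (fun s => G (z s) k) 0 (clamp T t)) in *.
   set (I2 := RInt (fun s => G (z_ m s) k) 0 (clamp T t)) in *.
   pose proof (half_pow_pos m). simpl pow in H.
   assert (L * (INR n * (2 * C * (/ 2) ^ m)) * clamp T t <= T * (L * INR n) * 2 * C * (/2)^m).
   { replace (T * (L * INR n) * 2 * C * (/2)^m) with (L * (INR n * (2 * C * (/ 2) ^ m)) * T) by ring.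
     apply Rmult_le_compat_l; try lra. apply Rmult_le_pos; auto. apply Rmult_le_pos; auto. nra. }
   replace (z t k - (z0 k + I1)) with ((z t k - (z0 k + I2)) - (I1 - I2)) by ring.
   pose proof (Rabs_triang (z t k - (z0 k + I2)) (- (I1 - I2))) as HT3. rewrite Rabs_Ropp in HT3.
   replace (z t k - (z0 k + I2) - (I1 - I2)) with (z t k - (z0 k + I2) + - (I1 - I2)) by ring.
   assert (0 <= T * (L * INR n) * 2 * C * (/2)^m) by (apply Rmult_le_pos; [|lra]; apply Rmult_le_pos; [|lra]; apply Rmult_le_pos; [|lra]; apply Rmult_le_pos; lra).
   assert (Hi' : Rabs (I1 - I2) <= L * (INR n * (2 * C * (/ 2) ^ m)) * clamp T t) by exact Hi.
   lra. }
 exists T, z. split; [auto|split].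
 - intros k. destruct (Nat.ltb_spec k n) as [Hk|Hk].
   + rewrite Z6 by auto. rewrite clamp_id by lra. rewrite RInt_point. change (zero : R) with 0. ring.
   + unfold z, slim. rewrite (Lim_seq_ext _ (fun _ => z0 k)). rewrite Lim_seq_const. reflexivity.
     intros m. destruct (Inv m) as (_ & _ & I3). apply I3; auto.
 - intros t Ht k Hk.
   set (F := fun b => RInt (fun s => G (z s) k) 0 b).
   assert (HF : is_derive F t (G (z t) k)).
   { apply (is_derive_RInt (fun s => G (z s) k) F 0 t). apply filter_forall. intros b. unfold F. apply (@RInt_correct R_CompleteNormedModule). apply ex_RInt_all. apply Cz; auto.
     apply Cz; auto. }
   apply is_derive_Reals in HF.
   intros eps He. destruct (HF eps He) as [del Hdel]. exists del. split. apply cond_pos.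
   intros t' Ht' Htt Hd. rewrite (Z6 t' k Hk), (Z6 t k Hk), !clamp_id by lra.
   specialize (Hdel (t' - t) ltac:(lra) Hd). replace (t + (t' - t)) with t' in Hdel by ring. unfold F in Hdel.
   replace (z0 k + RInt (fun s : R => G (z s) k) 0 t' - (z0 k + RInt (fun s : R => G (z s) k) 0 t)) with
     (RInt (fun s : R => G (z s) k) 0 t' - RInt (fun s : R => G (z s) k) 0 t) by (rewrite addK2; reflexivity). exact Hdel.
Qed.

Lemma near_start n T (z : R -> nat -> R) (G : (nat -> R) -> nat -> R) r : 0 < T -> 0 < r ->
 (forall t, 0<=t<=T -> forall k, (k<n)%nat -> deriv_within T (fun t => z t k) t (G (z t) k)) ->
 exists del, 0 < del /\ forall t, 0 <= t <= T -> t < del -> vnear n (z t) (z 0) r.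
Proof.
 intros HT Hr Hd. destruct (fin_combine1 n (fun k del => forall t, 0 <= t <= T -> t < del -> Rabs (z t k - z 0 k) < r)) as (del & Hdel & H).
 - intros k d d' Hdd Hd' Hk t Ht Htd. apply Hk; auto; lra.
 - intros k Hk. destruct (dw_cont T _ 0 _ (Hd 0 ltac:(lra) k Hk) ltac:(lra) r Hr) as (d & Hd0 & H).
   exists d; split; auto. intros t Ht Htd. apply H; auto. rewrite Rminus_0_r, Rabs_pos_eq; lra.
 - exists del; split; auto. intros t Ht Htd k Hk. apply H; auto.
Qed.

Lemma ode_unique n G (HG : LLv n G) T1 T2 z1 z2 : 0 < T1 -> 0 < T2 -> (forall k, (k<n)%nat -> z1 0 k = z2 0 k) ->
 (forall t, 0<=t<=T1 -> forall k, (k<n)%nat -> deriv_within T1 (fun t => z1 t k) t (G (z1 t) k)) ->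
 (forall t, 0<=t<=T2 -> forall k, (k<n)%nat -> deriv_within T2 (fun t => z2 t k) t (G (z2 t) k)) ->
 exists h, 0 < h /\ h <= T1 /\ h <= T2 /\ forall t, 0<=t<=h -> forall k, (k<n)%nat -> z1 t k = z2 t k.
Proof.
 intros HT1 HT2 H0 Hd1 Hd2.
 destruct (HG (z1 0)) as (r & L & Hr & HL & HLL).
 destruct (near_start n T1 z1 G r HT1 Hr Hd1) as (d1 & Hd1p & N1).
 destruct (near_start n T2 z2 G r HT2 Hr Hd2) as (d2 & Hd2p & N2).
 pose proof (pos_INR n) as Hn. assert (HLn : 0 <= L * INR n) by (apply Rmult_le_pos; lra).
 set (h := Rmin (Rmin (Rmin d1 d2) (Rmin T1 T2)) (/ (2 * (L * INR n + 1))) / 2).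
 assert (Hm : 0 < Rmin (Rmin (Rmin d1 d2) (Rmin T1 T2)) (/ (2 * (L * INR n + 1)))).
 { repeat apply Rmin_pos; auto. apply Rinv_0_lt_compat; lra. }
 pose proof (Rmin_l (Rmin (Rmin d1 d2) (Rmin T1 T2)) (/ (2 * (L * INR n + 1)))).
 pose proof (Rmin_r (Rmin (Rmin d1 d2) (Rmin T1 T2)) (/ (2 * (L * INR n + 1)))).
 pose proof (Rmin_l (Rmin d1 d2) (Rmin T1 T2)). pose proof (Rmin_r (Rmin d1 d2) (Rmin T1 T2)).
 pose proof (Rmin_l d1 d2). pose proof (Rmin_r d1 d2). pose proof (Rmin_l T1 T2). pose proof (Rmin_r T1 T2).
 assert (Hh : 0 < h) by (unfold h; lra).
 assert (Hh1 : h < d1) by (unfold h; lra). assert (Hh2 : h < d2) by (unfold h; lra).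
 assert (HhT1 : h <= T1) by (unfold h; lra). assert (HhT2 : h <= T2) by (unfold h; lra).
 assert (HhL : h * (L * INR n) <= / 2).
 { apply Rle_trans with (/ (2 * (L * INR n + 1)) * (L * INR n + 1)).
   apply Rmult_le_compat; try lra. unfold h; lra. right; field; lra. }
 assert (Nz1 : forall t, 0 <= t <= h -> vnear n (z1 t) (z1 0) r) by (intros; apply N1; lra).
 assert (Nz2 : forall t, 0 <= t <= h -> vnear n (z2 t) (z1 0) r).
 { intros t Ht j Hj. rewrite H0 by auto. apply N2; auto; lra. }
 set (B := INR n * (2 * r)).
 assert (Cl : forall j t, 0 <= t <= h -> vdist n (z1 t) (z2 t) <= B * (/2)^j).
 { induction j; intros t Ht.
   - simpl pow. rewrite Rmult_1_r. apply dsum_const_le. intros k Hk.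
     pose proof (Nz1 t Ht k Hk). pose proof (Nz2 t Ht k Hk).
     pose proof (Rabs_triang (z1 t k - z1 0 k) (z1 0 k - z2 t k)). rewrite (Rabs_minus_sym (z1 0 k)) in H10.
     replace (z1 t k - z1 0 k + (z1 0 k - z2 t k)) with (z1 t k - z2 t k) in H10 by ring. lra.
   - assert (Hk : forall k, (k < n)%nat -> Rabs (z1 t k - z2 t k) <= L * (B * (/2)^j) * h).
     { intros k Hk.
       assert (Hmvi := mvi h (fun t => z1 t k - z2 t k) (fun s => G (z1 s) k - G (z2 s) k) (L * (B * (/2)^j)) Hh).
       simpl in Hmvi. rewrite (H0 k Hk) in Hmvi. replace (z2 0 k - z2 0 k) with 0 in Hmvi by ring. setoid_rewrite Rminus_0_r in Hmvi.
       eapply Rle_trans. apply Hmvi; auto.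
       + intros s Hs. apply dw_minus; [apply dw_restrict with T1|apply dw_restrict with T2]; auto; [apply Hd1|apply Hd2]; auto; lra.
       + intros s Hs. eapply Rle_trans. apply HLL; auto. apply Rmult_le_compat_l; auto.
       + apply Rmult_le_compat_l; [|lra]. apply Rmult_le_pos; auto. apply Rmult_le_pos. unfold B; nra. left; apply half_pow_pos. }
     eapply Rle_trans. apply dsum_const_le. exact Hk.
     simpl pow. pose proof (half_pow_pos j). assert (0 <= B) by (unfold B; nra).
     replace (INR n * (L * (B * (/ 2) ^ j) * h)) with ((h * (L * INR n)) * (B * (/2)^j)) by ring.
     assert (0 <= B * (/2)^j) by nra. nra. }
 exists h. repeat split; auto. intros t Ht k Hk.
 assert (vdist n (z1 t) (z2 t) = 0). { apply zero_of_geo with B. apply vdist_ge0. intros; apply Cl; auto. }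
 pose proof (vdist_coord n (z1 t) (z2 t) k Hk). pose proof (Rabs_pos (z1 t k - z2 t k)).
 assert (HZ : Rabs (z1 t k - z2 t k) = 0) by lra. apply Rabs_eq_0 in HZ. lra.
Qed.


Lemma upd_upd v i a b : upd (upd v i a) i b = upd v i b.
Proof. apply functional_extensionality. intros j. unfold upd. destruct (Nat.eqb j i); auto. Qed.
Lemma upd_same v i : upd v i (v i) = v.
Proof. apply functional_extensionality. intros j. unfold upd. destruct (Nat.eqb_spec j i); subst; auto. Qed.
Lemma upd_eq v i a : upd v i a i = a.
Proof. unfold upd. rewrite Nat.eqb_refl. auto. Qed.

Lemma smooth_coord ar g i u0 : smooth_k ar g -> (i < ar)%nat ->
  exists del K, 0 < del /\ 0 <= K /\ forall w x, vnear ar w u0 del -> Rabs (x - u0 i) < del ->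
    Rabs (g (upd w i x) - g w) <= K * Rabs (x - w i).
Proof.
 intros [Hdep Hs] Hi. destruct (Hs 1%nat) as [_ Hd]. destruct (Hd i Hi) as (dg & Hpd & Hc0 & _).
 destruct (Hc0 u0 1 ltac:(lra)) as (del & Hdel & Hc).
 exists del, (Rabs (dg u0) + 1). split; auto. split. pose proof (Rabs_pos (dg u0)); lra.
 intros w x Hw Hx.
 set (phi := fun t => g (upd w i t)).
 assert (Hder : forall t, derivable_pt_lim phi t (dg (upd w i t))).
 { intros t eps He. destruct (Hpd (upd w i t) eps He) as (d & Hd0 & Hp). exists (mkposreal d Hd0).
   intros h Hh Hhd. unfold phi. specialize (Hp h Hh Hhd). rewrite upd_eq, upd_upd in Hp. auto. }
 destruct (MVT_gen phi (w i) x (fun t => dg (upd w i t))) as (c & Hcb & E).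
 - intros t _. apply is_derive_Reals. apply Hder.
 - intros t _. apply derivable_continuous_pt. exists (dg (upd w i t)). apply Hder.
 - unfold phi in E. rewrite upd_same in E. rewrite E, Rabs_mult.
   apply Rmult_le_compat_r. apply Rabs_pos.
   assert (Hn : forall j, (j < ar)%nat -> Rabs (upd w i c j - u0 j) < del).
   { intros j Hj. unfold upd. destruct (Nat.eqb_spec j i). subst.
     specialize (Hw i Hj). apply abs_lt_iff in Hw. apply abs_lt_iff in Hx. apply abs_lt_iff.
     unfold Rmin, Rmax in Hcb. destruct Rle_dec; lra. apply Hw; auto. }
   specialize (Hc _ Hn). pose proof (Rabs_triang (dg (upd w i c) - dg u0) (dg u0)).
   replace (dg (upd w i c) - dg u0 + dg u0) with (dg (upd w i c)) in H by ring. lra.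
Qed.

Lemma smooth_LL ar g : smooth_k ar g -> forall u0, exists rho K, 0 < rho /\ 0 <= K /\
  forall u u', vnear ar u u0 rho -> vnear ar u' u0 rho -> Rabs (g u - g u') <= K * vdist ar u u'.
Proof.
 intros Hs u0.
 destruct (fin_combine ar (fun i del K => forall w x, vnear ar w u0 del -> Rabs (x - u0 i) < del ->
    Rabs (g (upd w i x) - g w) <= K * Rabs (x - w i))) as (del & K & Hdel & HK & H).
 - intros i r r' L L' Hr HL Hr' HP w x Hw Hx. eapply Rle_trans. apply HP.
   eapply vnear_mono; [|exact Hw]; auto. lra. apply Rmult_le_compat_r; auto. apply Rabs_pos.
 - intros i Hi. apply smooth_coord; auto.
 - exists del, K. split; auto. split; auto. intros u u' Hu Hu'.
   set (mix := fun j i => if (i <? j)%nat then u' i else u i).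
   assert (Hmix : forall j, (j <= ar)%nat -> Rabs (g u - g (mix j)) <= K * dsum j (fun i => Rabs (u i - u' i))).
   { induction j; intros Hj.
     - simpl. replace (mix 0%nat) with u. replace (g u - g u) with 0 by ring. rewrite Rabs_R0; lra.
       apply functional_extensionality; intros i; unfold mix; destruct (Nat.ltb_spec i 0); auto; lia.
     - assert (E : mix (S j) = upd (mix j) j (u' j)).
       { apply functional_extensionality; intros i; unfold mix, upd.
         destruct (Nat.eqb_spec i j); subst. destruct (Nat.ltb_spec j (S j)); auto; lia.
         destruct (Nat.ltb_spec i (S j)), (Nat.ltb_spec i j); auto; lia. }
       assert (Hn : vnear ar (mix j) u0 del).
       { intros i Hi. unfold mix. destruct (i <? j)%nat; auto. }
       specialize (H j ltac:(lia) (mix j) (u' j) Hn (Hu' j ltac:(lia))).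
       rewrite <- E in H. assert (mix j j = u j) by (unfold mix; destruct (Nat.ltb_spec j j); auto; lia).
       rewrite H0 in H. specialize (IHj ltac:(lia)). cbn [dsum].
       pose proof (Rabs_triang (g u - g (mix j)) (- (g (mix (S j)) - g (mix j)))). rewrite Rabs_Ropp in H1.
       replace (g u - g (mix j) + - (g (mix (S j)) - g (mix j))) with (g u - g (mix (S j))) in H1 by ring.
       rewrite (Rabs_minus_sym (u' j)) in H. lra. }
   specialize (Hmix ar (le_n _)).
   replace (g (mix ar)) with (g u') in Hmix. exact Hmix.
   destruct Hs as [Hdep _]. apply Hdep. intros i Hi. unfold mix. destruct (Nat.ltb_spec i ar); auto; lia.
Qed.

Definition LL1 n (F : (nat -> R) -> R) := forall z0, exists r L, 0 < r /\ 0 <= L /\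
  forall z w, vnear n z z0 r -> vnear n w z0 r -> Rabs (F z - F w) <= L * vdist n z w.

Lemma vnear_refl n z r : 0 < r -> vnear n z z r.
Proof. intros Hr j _. replace (z j - z j) with 0 by ring. rewrite Rabs_R0; auto. Qed.

Lemma LL1_const n c : LL1 n (fun _ => c).
Proof. intros z0. exists 1, 0. repeat split; try lra. intros. replace (c - c) with 0 by ring. rewrite Rabs_R0. lra. Qed.

Lemma LL1_ext n F F' : (forall z, F z = F' z) -> LL1 n F -> LL1 n F'.
Proof. intros E H z0. destruct (H z0) as (r & L & Hr & HL & H1). exists r, L. repeat split; auto.
 intros. rewrite <- !E. auto. Qed.

Lemma LL1_coord n k : (k < n)%nat -> LL1 n (fun z => z k).
Proof. intros Hk z0. exists 1, 1. repeat split; try lra. intros. rewrite Rmult_1_l. apply vdist_coord; auto. Qed.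

Lemma LL1_plus n F1 F2 : LL1 n F1 -> LL1 n F2 -> LL1 n (fun z => F1 z + F2 z).
Proof.
 intros H1 H2 z0. destruct (H1 z0) as (r1 & L1 & Hr1 & HL1 & K1). destruct (H2 z0) as (r2 & L2 & Hr2 & HL2 & K2).
 exists (Rmin r1 r2), (L1 + L2). split. apply Rmin_pos; auto. split. lra.
 intros z w Hz Hw. 
 assert (A1 := K1 z w (vnear_mono _ _ _ _ _ (Rmin_l r1 r2) Hz) (vnear_mono _ _ _ _ _ (Rmin_l r1 r2) Hw)).
 assert (A2 := K2 z w (vnear_mono _ _ _ _ _ (Rmin_r r1 r2) Hz) (vnear_mono _ _ _ _ _ (Rmin_r r1 r2) Hw)).
 pose proof (Rabs_triang (F1 z - F1 w) (F2 z - F2 w)).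
 replace (F1 z - F1 w + (F2 z - F2 w)) with (F1 z + F2 z - (F1 w + F2 w)) in H by ring. lra.
Qed.

Lemma LL1_bound n F z0 r L : (forall z w, vnear n z z0 r -> vnear n w z0 r -> Rabs (F z - F w) <= L * vdist n z w) ->
  0 < r -> 0 <= L -> forall z, vnear n z z0 r -> Rabs (F z) <= Rabs (F z0) + L * INR n * r.
Proof.
 intros H Hr HL z Hz. specialize (H z z0 Hz (vnear_refl n z0 r Hr)). pose proof (vdist_near n z z0 r Hz).
 pose proof (Rabs_triang (F z - F z0) (F z0)). replace (F z - F z0 + F z0) with (F z) in H1 by ring.
 assert (L * vdist n z z0 <= L * (INR n * r)) by (apply Rmult_le_compat_l; auto). lra.
Qed.

Lemma LL1_mult n F1 F2 : LL1 n F1 -> LL1 n F2 -> LL1 n (fun z => F1 z * F2 z).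
Proof.
 intros H1 H2 z0. destruct (H1 z0) as (r1 & L1 & Hr1 & HL1 & K1). destruct (H2 z0) as (r2 & L2 & Hr2 & HL2 & K2).
 set (r := Rmin r1 r2). assert (Hr : 0 < r) by (apply Rmin_pos; auto).
 set (B1 := Rabs (F1 z0) + L1 * INR n * r1). set (B2 := Rabs (F2 z0) + L2 * INR n * r2).
 assert (0 <= B1) by (unfold B1; pose proof (Rabs_pos (F1 z0)); pose proof (pos_INR n); assert (0 <= L1 * INR n * r1) by (apply Rmult_le_pos; [apply Rmult_le_pos|]; lra); lra).
 assert (0 <= B2) by (unfold B2; pose proof (Rabs_pos (F2 z0)); pose proof (pos_INR n); assert (0 <= L2 * INR n * r2) by (apply Rmult_le_pos; [apply Rmult_le_pos|]; lra); lra).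
 exists r, (B1 * L2 + B2 * L1). split; auto. split. apply Rplus_le_le_0_compat; apply Rmult_le_pos; auto.
 intros z w Hz Hw.
 assert (Hz1 := vnear_mono _ _ _ _ _ (Rmin_l r1 r2) Hz). assert (Hw1 := vnear_mono _ _ _ _ _ (Rmin_l r1 r2) Hw).
 assert (Hz2 := vnear_mono _ _ _ _ _ (Rmin_r r1 r2) Hz). assert (Hw2 := vnear_mono _ _ _ _ _ (Rmin_r r1 r2) Hw).
 assert (A1 := K1 z w Hz1 Hw1). assert (A2 := K2 z w Hz2 Hw2).
 assert (b1 := LL1_bound n F1 z0 r1 L1 K1 Hr1 HL1 z Hz1). assert (b2 := LL1_bound n F2 z0 r2 L2 K2 Hr2 HL2 w Hw2).
 fold B1 in b1. fold B2 in b2.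
 replace (F1 z * F2 z - F1 w * F2 w) with (F1 z * (F2 z - F2 w) + F2 w * (F1 z - F1 w)) by ring.
 pose proof (Rabs_triang (F1 z * (F2 z - F2 w)) (F2 w * (F1 z - F1 w))). rewrite !Rabs_mult in H3.
 pose proof (vdist_ge0 n z w). pose proof (Rabs_pos (F1 z)). pose proof (Rabs_pos (F2 w)).
 pose proof (Rabs_pos (F2 z - F2 w)). pose proof (Rabs_pos (F1 z - F1 w)).
 assert (Rabs (F1 z) * Rabs (F2 z - F2 w) <= B1 * (L2 * vdist n z w)) by (apply Rmult_le_compat; auto).
 assert (Rabs (F2 w) * Rabs (F1 z - F1 w) <= B2 * (L1 * vdist n z w)) by (apply Rmult_le_compat; auto).
 lra.
Qed.

Lemma LL1_comp n ar (H : (nat -> R) -> R) (U : (nat -> R) -> nat -> R) m :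
  (forall u0, exists rho K, 0 < rho /\ 0 <= K /\
     forall u u', vnear ar u u0 rho -> vnear ar u' u0 rho -> Rabs (H u - H u') <= K * vdist ar u u') ->
  (forall i, (i < m)%nat -> LL1 n (fun z => U z i)) -> (forall i z, (m <= i)%nat -> U z i = 0) ->
  LL1 n (fun z => H (U z)).
Proof.
 intros HH HU HU0 z0.
 destruct (fin_combine m (fun i r L => forall z w, vnear n z z0 r -> vnear n w z0 r -> Rabs (U z i - U w i) <= L * vdist n z w)) as (r & L & Hr & HL & K).
 - intros i r r' L L' Hrr HLL Hr' HP z w Hz Hw. eapply Rle_trans. apply HP; eapply vnear_mono; eauto.
   apply Rmult_le_compat_r; auto. apply vdist_ge0.
 - intros i Hi. apply HU; auto.
 - assert (K' : forall i z w, vnear n z z0 r -> vnear n w z0 r -> Rabs (U z i - U w i) <= L * vdist n z w).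
   { intros i z w Hz Hw. destruct (Nat.lt_ge_cases i m). apply K; auto.
     rewrite !HU0 by auto. replace (0 - 0) with 0 by ring. rewrite Rabs_R0. apply Rmult_le_pos; auto. apply vdist_ge0. }
   destruct (HH (U z0)) as (rho & KH & Hrho & HKH & KK).
   pose proof (pos_INR n). assert (0 <= L * INR n) by (apply Rmult_le_pos; lra).
   set (r' := Rmin r (rho / (2 * (L * INR n + 1)))).
   assert (Hr' : 0 < r') by (apply Rmin_pos; auto; apply Rdiv_lt_0_compat; lra).
   assert (Hr'1 : r' <= r) by apply Rmin_l.
   assert (Hr'2 : (L * INR n + 1) * r' <= rho / 2).
   { apply Rle_trans with ((L * INR n + 1) * (rho / (2 * (L * INR n + 1)))).
     apply Rmult_le_compat_l; [lra|apply Rmin_r]. right; field; lra. }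
   assert (Nr : forall z, vnear n z z0 r' -> vnear ar (U z) (U z0) rho).
   { intros z Hz i _. assert (Hz' := vnear_mono _ _ _ _ _ Hr'1 Hz).
     eapply Rle_lt_trans. apply K'; auto. apply vnear_refl; auto.
     pose proof (vdist_near n z z0 r' Hz).
     apply Rle_lt_trans with (L * (INR n * r')). apply Rmult_le_compat_l; auto.
     nra. }
   exists r', (KH * (INR ar * L)). split; auto. split. apply Rmult_le_pos; auto. apply Rmult_le_pos; auto. apply pos_INR.
   intros z w Hz Hw. eapply Rle_trans. apply KK; auto.
   rewrite Rmult_assoc. apply Rmult_le_compat_l; auto.
   rewrite Rmult_assoc. apply dsum_const_le. intros i _. apply K'; eapply vnear_mono; eauto.
Qed.


Fixpoint term_ind2 {Sym : Type} (P : term Sym -> Prop)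
  (fV : forall v, P (TVar Sym v)) (fC : forall q, P (TConst Sym q))
  (fP : forall a b, P a -> P b -> P (TPlus a b)) (fT : forall a b, P a -> P b -> P (TTimes a b))
  (fF : forall (s : Sym) (args : list (term Sym)), List.Forall P args -> P (TFn s args)) (t : term Sym) {struct t} : P t :=
  match t with
  | TVar v => fV v
  | TConst q => fC q
  | TPlus a b => fP a b (term_ind2 P fV fC fP fT fF a) (term_ind2 P fV fC fP fT fF b)
  | TTimes a b => fT a b (term_ind2 P fV fC fP fT fF a) (term_ind2 P fV fC fP fT fF b)
  | TFn s args => fF s args ((fix go (l : list (term Sym)) : List.Forall P l :=
        match l with nil => List.Forall_nil P | cons a l' => List.Forall_cons a (term_ind2 P fV fC fP fT fF a) (go l') end) args)
  end.

Lemma eval_LL {Sym : Type} (ar : Sym -> nat) (I : Sym -> (nat -> R) -> R) (HI : forall s, smooth_k (ar s) (I s))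
  n (st : (nat -> R) -> state)
  (Hst : forall v, (exists c, forall z, st z v = c) \/ (exists k, (k < n)%nat /\ forall z, st z v = z k)) :
  forall t, LL1 n (fun z => eval I (st z) t).
Proof.
 apply term_ind2.
 - intros v. simpl. destruct (Hst v) as [[c Hc]|(k & Hk & Hc)].
   + eapply LL1_ext; [|apply (LL1_const n c)]. intros; simpl; auto.
   + eapply LL1_ext; [|apply (LL1_coord n k Hk)]. intros; simpl; auto.
 - intros q. simpl. apply LL1_const.
 - intros a b Ha Hb. apply LL1_plus; auto.
 - intros a b Ha Hb. apply LL1_mult; auto.
 - intros s args Hargs. simpl.
   apply (LL1_comp n (ar s) (I s) (fun z j => nth j (map (eval I (st z)) args) 0) (length args)).
   + apply smooth_LL; auto.
   + intros i Hi. eapply LL1_ext; [|apply (proj1 (Forall_forall _ _) Hargs (nth i args (TConst Sym 0%Q)) (nth_In _ _ Hi))].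
     intros z. simpl. rewrite (nth_indep _ 0 (eval I (st z) (TConst Sym 0%Q))) by (rewrite length_map; auto).
     rewrite map_nth. auto.
   + intros i z Hi. apply nth_overflow. rewrite length_map; auto.
Qed.

Fixpoint setl (st : state) (vs : list var) (a : nat -> R) : state :=
  match vs with
  | [] => st
  | v0 :: vs' => fun v => if var_eqb v v0 then a O else setl st vs' (fun k => a (S k)) v
  end.

Definition var_eq_dec (u v : var) : {u = v} + {u <> v}.
Proof. decide equality; apply Nat.eq_dec. Defined.

Lemma var_eqb_spec u v : var_eqb u v = true <-> u = v.
Proof. destruct u, v; simpl; split; intros H; try discriminate; try (apply Nat.eqb_eq in H; subst; auto);
  try (inversion H; subst; apply Nat.eqb_refl). Qed.

Lemma var_eqb_false u v : u <> v -> var_eqb u v = false.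
Proof. intros H. destruct (var_eqb u v) eqn:E; auto. apply var_eqb_spec in E. contradiction. Qed.

Lemma assign_setl st ys a v : assign st ys a v = setl st (map Var ys) a v.
Proof. revert a. induction ys; intros a0; simpl; auto. destruct (var_eqb v (Var a)); auto. Qed.

Lemma setl_notin st vs a v : ~ In v vs -> setl st vs a v = st v.
Proof. revert a. induction vs; intros a0 H; simpl; auto. rewrite var_eqb_false. apply IHvs. intros Hc; apply H; right; auto.
 intros Hc; apply H; left; auto. Qed.

Lemma setl_in vs v : In v vs -> exists k, (k < length vs)%nat /\ nth k vs v = v /\ forall st a, setl st vs a v = a k.
Proof.
 induction vs; intros H; [destruct H|]. simpl.
 destruct (var_eqb v a) eqn:E.
 - apply var_eqb_spec in E. subst. exists O. split; [lia|]. split; auto.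
 - destruct H as [H|H]. subst. rewrite (proj2 (var_eqb_spec v v) eq_refl) in E; discriminate.
   destruct (IHvs H) as (k & Hk & Hn & Hs). exists (S k). split; [lia|]. split; auto.
Qed.

Lemma setl_nth st vs a k d : NoDup vs -> (k < length vs)%nat -> setl st vs a (nth k vs d) = a k.
Proof.
 revert a k. induction vs; intros a0 k Hnd Hk; simpl in *; [lia|].
 inversion Hnd; subst. destruct k.
 - rewrite (proj2 (var_eqb_spec a a) eq_refl). auto.
 - rewrite var_eqb_false. apply (IHvs (fun k => a0 (S k)) k); auto; lia.
   intros E. apply H1. rewrite <- E. apply nth_In. lia.
Qed.

Lemma setl_pt st1 st2 vs a v : st1 v = st2 v -> setl st1 vs a v = setl st2 vs a v.
Proof. intros H. destruct (in_dec var_eq_dec v vs).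
 destruct (setl_in vs v i) as (k & _ & _ & Hs). rewrite !Hs; auto. rewrite !setl_notin; auto. Qed.

Lemma setl_Hst (σ : state) xs v : (exists c, forall z, setl σ (map Var xs) z v = c) \/
  (exists k, (k < length xs)%nat /\ forall z, setl σ (map Var xs) z v = z k).
Proof. destruct (in_dec var_eq_dec v (map Var xs)).
 - right. destruct (setl_in _ v i) as (k & Hk & _ & Hs). rewrite length_map in Hk. exists k; split; auto.
 - left. exists (σ v). intros; apply setl_notin; auto. Qed.

Section Ext.
Context {Sym : Type} (I : Sym -> (nat -> R) -> R).

Lemma eval_ext : forall t st1 st2, (forall v, occurs v t = true -> st1 v = st2 v) -> eval I st1 t = eval I st2 t.
Proof.
 apply (term_ind2 (fun t => forall st1 st2, (forall v, occurs v t = true -> st1 v = st2 v) -> eval I st1 t = eval I st2 t)).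
 - intros v st1 st2 H. simpl. apply H. simpl. apply var_eqb_spec; auto.
 - intros; reflexivity.
 - intros a b Ha Hb st1 st2 H. simpl. rewrite (Ha st1 st2), (Hb st1 st2); auto; intros v Hv; apply H; simpl; rewrite Hv; auto with bool.
 - intros a b Ha Hb st1 st2 H. simpl. rewrite (Ha st1 st2), (Hb st1 st2); auto; intros v Hv; apply H; simpl; rewrite Hv; auto with bool.
 - intros s args Hargs st1 st2 H. simpl.
   replace (map (eval I st1) args) with (map (eval I st2) args); auto.
   apply map_ext_in. intros a Ha. symmetry. apply (proj1 (Forall_forall _ _) Hargs a Ha).
   intros v Hv. apply H. simpl. apply existsb_exists. exists a; auto.
Qed.

Lemma dfree_noD : forall t : term Sym, dfree t = true -> forall i, occurs (DVar i) t = false.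
Proof.
 apply (term_ind2 (fun t => dfree t = true -> forall i, occurs (DVar i) t = false)).
 - intros v H i. destruct v; simpl in *; auto. discriminate.
 - intros; reflexivity.
 - intros a b Ha Hb H i. simpl in *. apply andb_prop in H. destruct H. rewrite Ha, Hb; auto.
 - intros a b Ha Hb H i. simpl in *. apply andb_prop in H. destruct H. rewrite Ha, Hb; auto.
 - intros s args Hargs H i. simpl in *. induction Hargs; simpl in *; auto.
   apply andb_prop in H. destruct H. rewrite H0; auto.
Qed.

Lemma holds_ext : forall P st1 st2, (forall v, occurs_fml v P = true -> st1 v = st2 v) -> (holds I st1 P <-> holds I st2 P).
Proof.
 induction P; intros st1 st2 H; simpl in *.
 - rewrite (eval_ext a st1 st2), (eval_ext b st1 st2); [destruct c; tauto| |];
   intros v Hv; apply H; rewrite Hv; auto with bool.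
 - rewrite (IHP1 st1 st2), (IHP2 st1 st2); [tauto| |]; intros v Hv; apply H; rewrite Hv; auto with bool.
 - rewrite (IHP1 st1 st2), (IHP2 st1 st2); [tauto| |]; intros v Hv; apply H; rewrite Hv; auto with bool.
 - rewrite (IHP st1 st2); [tauto|]; auto.
Qed.

Lemma semi_noD : forall P : fml Sym, semianalytic P = true -> forall i, occurs_fml (DVar i) P = false.
Proof.
 induction P; simpl; intros H i.
 - apply andb_prop in H; destruct H. rewrite !dfree_noD; auto.
 - apply andb_prop in H; destruct H. rewrite IHP1, IHP2; auto.
 - apply andb_prop in H; destruct H. rewrite IHP1, IHP2; auto.
 - auto.
Qed.
End Ext.


Section Main.
Context (Sym : Type) (ar : Sym -> nat) (I : Sym -> (nat -> R) -> R)
  (HI : forall s, smooth_k (ar s) (I s))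
  (xs : list nat) (fs : list (term Sym)) (P : fml Sym) (ys : list nat)
  (Hxs : NoDup xs) (Hlen : length fs = length xs)
  (Hfdf : forall t, In t fs -> dfree t = true)
  (HP : semianalytic P = true)
  (Hys : NoDup ys)
  (Hfresh : forall y, In y ys ->
     ~ In y xs /\
     (forall t, In t fs -> occurs (Var y) t = false) /\
     occurs_fml (Var y) P = false).

Definition xv k := Var (nth k xs O).
Definition dv k := DVar (nth k xs O).
Definition fk k := nth k fs (TConst Sym 0%Q).
Definition nn := length xs.

Definition sol (Q : state -> Prop) (om : state) (T : R) (phi : R -> state) : Prop :=
  0 <= T /\ (forall v, ~ is_dvar_of xs v -> phi 0 v = om v) /\
  forall zeta, 0 <= zeta <= T ->
    (forall k, (k < length xs)%nat -> phi zeta (dv k) = eval I (phi zeta) (fk k)) /\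
    Q (phi zeta) /\
    (forall v, ~ in_xs xs v -> phi zeta v = phi 0 v) /\
    (0 < T -> forall k, (k < length xs)%nat ->
       deriv_within T (fun t => phi t (xv k)) zeta (phi zeta (dv k))).

Lemma ode_rel_sol Q om nu : ode_rel I xs fs Q om nu <-> exists T phi, sol Q om T phi /\ phi T = nu.
Proof. unfold ode_rel, sol, xv, dv, fk. split.
 - intros (T & phi & H1 & H2 & H3 & H4). exists T, phi. auto.
 - intros (T & phi & (H1 & H2 & H4) & H3). exists T, phi. auto. Qed.

Lemma fk_in k : (k < nn)%nat -> In (fk k) fs.
Proof. intros. unfold fk. apply nth_In. unfold nn in *. lia. Qed.

Lemma eval_noY k st1 st2 : (k < nn)%nat -> (forall i, ~ In i ys -> st1 (Var i) = st2 (Var i)) ->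
  eval I st1 (fk k) = eval I st2 (fk k).
Proof.
 intros Hk H. apply eval_ext. intros v Hv. destruct v as [i|i].
 - apply H. intros Hi. destruct (Hfresh i Hi) as (_ & Hf & _). rewrite (Hf _ (fk_in k Hk)) in Hv. discriminate.
 - rewrite (dfree_noD _ (Hfdf _ (fk_in k Hk))) in Hv. discriminate.
Qed.

Lemma holds_noY st1 st2 : (forall i, ~ In i ys -> st1 (Var i) = st2 (Var i)) -> (holds I st1 P <-> holds I st2 P).
Proof.
 intros H. apply holds_ext. intros v Hv. destruct v as [i|i].
 - apply H. intros Hi. destruct (Hfresh i Hi) as (_ & _ & Hf). rewrite Hf in Hv. discriminate.
 - rewrite (semi_noD _ HP) in Hv. discriminate.
Qed.

Lemma nodup_V : NoDup (map Var xs).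
Proof. apply Injective_map_NoDup; auto. intros a b E; inversion E; auto. Qed.
Lemma nodup_D : NoDup (map DVar xs).
Proof. apply Injective_map_NoDup; auto. intros a b E; inversion E; auto. Qed.

Lemma nth_mapV k : nth k (map Var xs) (Var O) = xv k.
Proof. unfold xv. apply (map_nth Var xs O k). Qed.
Lemma nth_mapD k : nth k (map DVar xs) (DVar O) = dv k.
Proof. unfold dv. apply (map_nth DVar xs O k). Qed.

Lemma setlV_xv st z k : (k < nn)%nat -> setl st (map Var xs) z (xv k) = z k.
Proof. intros Hk. rewrite <- nth_mapV. apply setl_nth. apply nodup_V. rewrite length_map; auto. Qed.
Lemma setlD_dv st z k : (k < nn)%nat -> setl st (map DVar xs) z (dv k) = z k.
Proof. intros Hk. rewrite <- nth_mapD. apply setl_nth. apply nodup_D. rewrite length_map; auto. Qed.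

Lemma Var_notin_D i : ~ In (Var i) (map DVar xs).
Proof. intros H. apply in_map_iff in H. destruct H as (x & E & _). discriminate. Qed.
Lemma DVar_notin_V i : ~ In (DVar i) (map Var xs).
Proof. intros H. apply in_map_iff in H. destruct H as (x & E & _). discriminate. Qed.

Lemma var_cases i : (exists k, (k < nn)%nat /\ Var i = xv k) \/ ~ In i xs.
Proof.
 destruct (In_dec Nat.eq_dec i xs) as [Hi|Hi]; [left|right; auto].
 apply (In_nth xs i O) in Hi. destruct Hi as (k & Hk & E). exists k. split; auto. unfold xv; rewrite E; auto.
Qed.

Lemma notin_xs_Var i : ~ In i xs -> ~ in_xs xs (Var i).
Proof. intros H (j & Hj & [E|E]); inversion E; subst; auto. Qed.
Lemma Var_not_dvar i : ~ is_dvar_of xs (Var i).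
Proof. intros (j & _ & E). discriminate. Qed.

Definition G (sg : state) (z : nat -> R) (k : nat) := eval I (setl sg (map Var xs) z) (fk k).

Lemma G_base s1 s2 z k : (k < nn)%nat -> (forall i, s1 (Var i) = s2 (Var i)) -> G s1 z k = G s2 z k.
Proof. intros Hk H. unfold G. apply eval_noY; auto. intros i _. apply setl_pt; auto. Qed.

Lemma LLG sg : LLv nn (G sg).
Proof.
 intros z0. destruct (fin_combine nn (fun k r L => forall z w, vnear nn z z0 r -> vnear nn w z0 r -> Rabs (G sg z k - G sg w k) <= L * vdist nn z w)) as (r & L & Hr & HL & H).
 - intros i r r' L L' Hrr HLL Hr' Hq z w Hz Hw. eapply Rle_trans. apply Hq; eapply vnear_mono; eauto.
   apply Rmult_le_compat_r; auto. apply vdist_ge0.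
 - intros k Hk. destruct (eval_LL ar I HI nn (fun z => setl sg (map Var xs) z) (setl_Hst sg xs) (fk k) z0) as (r & L & Hr & HL & H).
   exists r, L. repeat split; auto.
 - exists r, L. repeat split; auto.
Qed.

Lemma sol_G Q om T phi t k : sol Q om T phi -> 0 <= t <= T -> (k < nn)%nat ->
  phi t (dv k) = G (phi 0) (fun j => phi t (xv j)) k.
Proof.
 intros (HT & H0 & H) Ht Hk. destruct (H t Ht) as (H1 & _ & H3 & _). rewrite H1 by auto. unfold G.
 apply eval_noY; auto. intros i _. destruct (var_cases i) as [(j & Hj & E)|Hi].
 - rewrite E. rewrite setlV_xv; auto.
 - rewrite setl_notin. apply H3. apply notin_xs_Var; auto.
   intros Hc. apply in_map_iff in Hc. destruct Hc as (x & E & Hx). inversion E; subst; auto.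
Qed.

Lemma sol_exists nu : exists T phi, 0 < T /\ sol (fun _ => True) nu T phi.
Proof.
 destruct (ode_exists nn (G nu) (fun k => nu (xv k)) (LLG nu)) as (T & zf & HT & Hz0 & Hd).
 set (phi := fun t => setl (setl nu (map Var xs) (zf t)) (map DVar xs) (fun k => G nu (zf t) k)).
 assert (Px : forall t k, (k < nn)%nat -> phi t (xv k) = zf t k).
 { intros t k Hk. unfold phi, xv. rewrite setl_notin by apply Var_notin_D. apply setlV_xv; auto. }
 assert (Pd : forall t k, (k < nn)%nat -> phi t (dv k) = G nu (zf t) k).
 { intros t k Hk. unfold phi. apply setlD_dv; auto. }
 assert (Pv : forall t i, phi t (Var i) = setl nu (map Var xs) (zf t) (Var i)).
 { intros t i. unfold phi. apply setl_notin, Var_notin_D. }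
 exists T, phi. split; auto. split; [lra|split].
 - intros v Hv. destruct v as [i|i].
   + rewrite Pv. destruct (var_cases i) as [(k & Hk & E)|Hi].
     * rewrite E, setlV_xv, Hz0; auto.
     * apply setl_notin. intros Hc. apply in_map_iff in Hc. destruct Hc as (x & E & Hx). inversion E; subst; auto.
   + unfold phi. rewrite setl_notin. apply setl_notin. apply DVar_notin_V.
     intros Hc. apply Hv. apply in_map_iff in Hc. destruct Hc as (x & E & Hx). exists x; split; auto.
 - intros zeta Hz. split; [|split; [auto|split]].
   + intros k Hk. rewrite Pd by auto. unfold G. apply eval_noY; auto; intros i _; symmetry; apply Pv.
   + intros v Hv. unfold phi. rewrite !setl_notin; auto.
     * intros Hc. apply Hv. apply in_map_iff in Hc. destruct Hc as (x & E & Hx). exists x; split; auto.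
     * intros Hc. apply Hv. apply in_map_iff in Hc. destruct Hc as (x & E & Hx). exists x; split; auto.
     * intros Hc. apply Hv. apply in_map_iff in Hc. destruct Hc as (x & E & Hx). exists x; split; auto.
     * intros Hc. apply Hv. apply in_map_iff in Hc. destruct Hc as (x & E & Hx). exists x; split; auto.
   + intros _ k Hk. rewrite Pd by auto. apply dw_ext with (g := fun t => zf t k); auto.
     intros t _. symmetry; apply Px; auto.
Qed.

Lemma sol_restrict Q om T phi T' : sol Q om T phi -> 0 <= T' <= T -> sol Q om T' phi.
Proof.
 intros (HT & H0 & H) HT'. split; [lra|split; auto]. intros zeta Hz.
 destruct (H zeta ltac:(lra)) as (H1 & H2 & H3 & H4). repeat split; auto.
 intros HT'0 k Hk. apply dw_restrict with T; [apply H4; auto; lra|lra].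
Qed.

Lemma sol_weaken (Q Q' : state -> Prop) om T phi : (forall t, 0 <= t <= T -> Q (phi t) -> Q' (phi t)) -> sol Q om T phi -> sol Q' om T phi.
Proof. intros HQ (HT & H0 & H). split; auto. split; auto. intros zeta Hz. destruct (H zeta Hz) as (H1 & H2 & H3 & H4). repeat split; auto. Qed.

Lemma sol_shift Q om T phi s : sol Q om T phi -> 0 <= s <= T -> sol Q (phi s) (T - s) (fun u => phi (s + u)).
Proof.
 intros (HT & H0 & H) Hs. split; [lra|split].
 - intros v _. rewrite Rplus_0_r. auto.
 - intros zeta Hz. destruct (H (s + zeta) ltac:(lra)) as (H1 & H2 & H3 & H4). repeat split; auto.
   + intros v Hv. rewrite Rplus_0_r. rewrite H3 by auto. destruct (H s ltac:(lra)) as (_ & _ & B3 & _). rewrite B3; auto.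
   + intros HTs k Hk. apply (dw_shift T (fun t => phi t (xv k)) s zeta). lra. apply H4; auto. lra.
Qed.

Lemma Var_agree_dvar (s1 s2 : state) : (forall v, ~ is_dvar_of xs v -> s1 v = s2 v) -> forall i, s1 (Var i) = s2 (Var i).
Proof. intros H i. apply H. apply Var_not_dvar. Qed.

Lemma sol_concat Q om T1 phi1 T2 phi2 : sol Q om T1 phi1 -> sol Q (phi1 T1) T2 phi2 ->
  sol Q om (T1 + T2) (fun t => if Rle_dec t T1 then phi1 t else phi2 (t - T1)).
Proof.
 intros (HT1 & H01 & H1) (HT2 & H02 & H2). set (psi := fun t => if Rle_dec t T1 then phi1 t else phi2 (t - T1)).
 assert (E1 : forall t, t <= T1 -> psi t = phi1 t) by (intros t Ht; unfold psi; destruct Rle_dec; auto; lra).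
 assert (E2 : forall t, T1 < t -> psi t = phi2 (t - T1)) by (intros t Ht; unfold psi; destruct Rle_dec; auto; lra).
 split; [lra|split].
 - intros v Hv. rewrite E1 by lra. auto.
 - intros zeta Hz. destruct (Rle_dec zeta T1) as [Hle|Hgt].
   + rewrite (E1 zeta Hle). destruct (H1 zeta ltac:(lra)) as (A1 & A2 & A3 & A4).
     split; auto. split; auto. split. { intros v Hv. rewrite E1 by lra. auto. }
     intros HT k Hk.
     assert (Hval : forall eps, 0 < eps -> exists del, 0 < del /\ forall t, 0 <= t <= T1 -> t <> zeta -> Rabs (t - zeta) < del ->
        Rabs ((phi1 t (xv k) - phi1 zeta (xv k)) / (t - zeta) - phi1 zeta (dv k)) < eps).
     { intros eps He. destruct (Rlt_dec 0 T1) as [HT1p|HT1p].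
       - apply A4; auto.
       - exists 1. split; [lra|]. intros t Ht Htz. lra. }
     destruct (Req_dec zeta T1) as [Heq|Hneq].
     *
       subst zeta.
       assert (Hval2 : forall eps, 0 < eps -> exists del, 0 < del /\ forall t, 0 <= t <= T2 -> t <> 0 -> Rabs (t - 0) < del ->
          Rabs ((phi2 t (xv k) - phi2 0 (xv k)) / (t - 0) - phi2 0 (dv k)) < eps).
       { intros eps He. destruct (Rlt_dec 0 T2) as [HT2p|HT2p].
         - apply (proj2 (proj2 (proj2 (H2 0 ltac:(lra))))); auto.
         - exists 1. split; [lra|]. intros t Ht Htz. lra. }
       assert (Ex : phi2 0 (xv k) = phi1 T1 (xv k)) by (apply H02, Var_not_dvar).
       assert (Ed : phi2 0 (dv k) = phi1 T1 (dv k)).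
       { destruct (H2 0 ltac:(lra)) as (B1 & _). rewrite B1, A1 by auto. apply eval_noY; auto.
         intros i _. apply H02, Var_not_dvar. }
       intros eps He. destruct (Hval eps He) as (d1 & Hd1 & K1). destruct (Hval2 eps He) as (d2 & Hd2 & K2).
       exists (Rmin d1 d2). split. apply Rmin_pos; auto. intros t Ht Htz Htd.
       pose proof (Rmin_l d1 d2). pose proof (Rmin_r d1 d2). rewrite (E1 T1) by lra.
       destruct (Rle_dec t T1).
       -- rewrite E1 by auto. apply K1; auto; lra.
       -- rewrite E2 by lra. rewrite <- Ex, <- Ed. 
          specialize (K2 (t - T1) ltac:(lra) ltac:(lra) ltac:(rewrite Rminus_0_r; apply abs_lt_iff in Htd; apply abs_lt_iff; lra)).
          rewrite Rminus_0_r in K2. replace (t - T1) with (t - T1) in K2 by ring. exact K2.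
     * assert (Hlt : zeta < T1) by lra. intros eps He. destruct (Hval eps He) as (d1 & Hd1 & K1).
       exists (Rmin d1 (T1 - zeta)). split. apply Rmin_pos; lra. intros t Ht Htz Htd.
       pose proof (Rmin_l d1 (T1 - zeta)). pose proof (Rmin_r d1 (T1 - zeta)). apply abs_lt_iff in Htd.
       rewrite !E1 by lra. apply K1; auto. lra. apply abs_lt_iff; lra.
   + assert (Hgt' : T1 < zeta) by lra. rewrite (E2 zeta Hgt').
     destruct (H2 (zeta - T1) ltac:(lra)) as (A1 & A2 & A3 & A4).
     split; auto. split; auto. split.
     { intros v Hv. rewrite E1 by lra. rewrite A3 by auto. rewrite H02. destruct (H1 T1 ltac:(lra)) as (_ & _ & B3 & _). apply B3; auto.
       intros (j & Hj & E). apply Hv. exists j; split; auto. }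
     intros HT k Hk. intros eps He. destruct (A4 ltac:(lra) k Hk eps He) as (d2 & Hd2 & K2).
     exists (Rmin d2 (zeta - T1)). split. apply Rmin_pos; lra. intros t Ht Htz Htd.
     pose proof (Rmin_l d2 (zeta - T1)). pose proof (Rmin_r d2 (zeta - T1)). apply abs_lt_iff in Htd.
     rewrite E2 by lra. specialize (K2 (t - T1) ltac:(lra) ltac:(lra) ltac:(apply abs_lt_iff; lra)).
     replace (t - T1 - (zeta - T1)) with (t - zeta) in K2 by ring. rewrite (E2 zeta) by lra. exact K2.
Qed.

Lemma sol_shiftY Q Q' om T phi b : sol Q om T phi -> (forall t, 0 <= t <= T -> Q' (assign (phi t) ys b)) ->
  sol Q' (assign om ys b) T (fun t => assign (phi t) ys b).
Proof.
 intros (HT & H0 & H) HQ.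
 assert (Ax : forall st k, (k < nn)%nat -> assign st ys b (xv k) = st (xv k)).
 { intros st k Hk. rewrite assign_setl. apply setl_notin. intros Hc. apply in_map_iff in Hc.
   destruct Hc as (y & E & Hy). destruct (Hfresh y Hy) as (Hn & _). apply Hn. unfold xv in E. inversion E. apply nth_In. unfold nn in Hk; lia. }
 assert (Ad : forall st k, assign st ys b (dv k) = st (dv k)).
 { intros st k. rewrite assign_setl. apply setl_notin. unfold dv. intros Hc. apply in_map_iff in Hc. destruct Hc as (y & E & _). discriminate. }
 assert (Ai : forall st i, ~ In i ys -> assign st ys b (Var i) = st (Var i)).
 { intros st i Hi. rewrite assign_setl. apply setl_notin. intros Hc. apply in_map_iff in Hc. destruct Hc as (y & E & Hy). inversion E; subst; auto. }
 split; auto. split.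
 - intros v Hv. rewrite !assign_setl. apply setl_pt. auto.
 - intros zeta Hz. destruct (H zeta Hz) as (A1 & A2 & A3 & A4). split; [|split; [auto|split]].
   + intros k Hk. rewrite Ad, A1 by auto. apply eval_noY; auto. intros i Hi. symmetry; apply Ai; auto.
   + intros v Hv. rewrite !assign_setl. apply setl_pt. auto.
   + intros HT0 k Hk. rewrite Ad. apply dw_ext with (g := fun t => phi t (xv k)); auto.
     intros t _. symmetry; apply Ax; auto.
Qed.

Lemma sol_leave Q sg T phi k : sol Q sg T phi -> 0 < T -> (k < nn)%nat -> eval I sg (fk k) <> 0 ->
  exists h, 0 < h /\ h <= T /\ forall t, 0 < t <= h -> phi t (xv k) <> sg (xv k).
Proof.
 intros Hs HT Hk Hne. destruct Hs as (HT0 & H0 & H). destruct (H 0 ltac:(lra)) as (A1 & _ & _ & A4).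
 set (c := phi 0 (dv k)).
 assert (Hc : c = eval I sg (fk k)). { unfold c. rewrite A1 by auto. apply eval_noY; auto. intros i _. apply H0, Var_not_dvar. }
 assert (Hcp : 0 < Rabs c) by (rewrite Hc; apply Rabs_pos_lt; auto).
 destruct (A4 HT k Hk (Rabs c) Hcp) as (del & Hdel & K).
 exists (Rmin (del / 2) T). split. apply Rmin_pos; lra. split. apply Rmin_r.
 intros t Ht E. pose proof (Rmin_l (del/2) T). pose proof (Rmin_r (del/2) T).
 specialize (K t ltac:(lra) ltac:(lra) ltac:(rewrite Rminus_0_r, Rabs_pos_eq; lra)).
 rewrite E, (H0 (xv k) (Var_not_dvar _)) in K. replace (sg (xv k) - sg (xv k)) with 0 in K by ring.
 unfold Rdiv in K. rewrite Rmult_0_l in K. fold c in K. replace (0 - c) with (- c) in K by ring. rewrite Rabs_Ropp in K. lra.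
Qed.

Lemma sol_unique Q1 Q2 s1 s2 T1 T2 phi1 phi2 : sol Q1 s1 T1 phi1 -> sol Q2 s2 T2 phi2 -> 0 < T1 -> 0 < T2 ->
  (forall i, phi1 0 (Var i) = phi2 0 (Var i)) ->
  exists h, 0 < h /\ h <= T1 /\ h <= T2 /\ forall t, 0 <= t <= h -> forall i, phi1 t (Var i) = phi2 t (Var i).
Proof.
 intros S1 S2 HT1 HT2 H0.
 destruct (ode_unique nn (G (phi1 0)) (LLG _) T1 T2 (fun t k => phi1 t (xv k)) (fun t k => phi2 t (xv k)) HT1 HT2) as (h & Hh & Hh1 & Hh2 & E).
 - intros k Hk. apply H0.
 - intros t Ht k Hk. rewrite <- (sol_G _ _ _ _ _ _ S1 Ht Hk). destruct S1 as (_ & _ & S1). apply (S1 t Ht); auto.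
 - intros t Ht k Hk. rewrite (G_base (phi1 0) (phi2 0)) by auto. rewrite <- (sol_G _ _ _ _ _ _ S2 Ht Hk).
   destruct S2 as (_ & _ & S2). apply (S2 t Ht); auto.
 - exists h. repeat split; auto. intros t Ht i. destruct (var_cases i) as [(k & Hk & Ei)|Hi].
   + rewrite Ei. apply E; auto.
   + destruct S1 as (_ & _ & S1). destruct S2 as (_ & _ & S2).
     rewrite (proj1 (proj2 (proj2 (S1 t ltac:(lra))))), (proj1 (proj2 (proj2 (S2 t ltac:(lra))))); auto; apply notin_xs_Var; auto.
Qed.

Lemma yk_notin k : (k < length ys)%nat -> ~ in_xs xs (Var (nth k ys O)).
Proof. intros Hk (j & Hj & [E|E]); inversion E; subst. destruct (Hfresh (nth k ys O) (nth_In _ _ Hk)) as (Hn & _). auto. Qed.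

Lemma assign_back om a : assign (assign om ys a) ys (fun k => om (Var (nth k ys O))) = om.
Proof.
 apply functional_extensionality. intros v. rewrite !assign_setl.
 destruct (in_dec var_eq_dec v (map Var ys)) as [Hi|Hi].
 - destruct (setl_in _ v Hi) as (k & Hk & Hn & Hs). rewrite Hs. rewrite length_map in Hk.
   rewrite (nth_indep _ v (Var O)) in Hn by (rewrite length_map; auto). rewrite map_nth in Hn. rewrite Hn. auto.
 - rewrite setl_notin by auto. rewrite assign_setl, setl_notin; auto.
Qed.

Lemma main_iff (Hevolve : forall st : state, exists k, (k < length xs)%nat /\
               eval I st (nth k fs (TConst Sym 0%Q)) <> 0) (Hylen : length ys = length xs) omega :
  box (ode_rel I xs fs (fun _ => True)) (fun nu => holds I nu P) omega
  <->
  (forall a : nat -> R,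
     let D := fun st => holds I st P \/ vec_eq st xs ys in
     box (ode_rel I xs fs D)
       (fun nu => vec_eq nu xs ys ->
          holds I nu P /\
          diamond (ode_rel I xs fs D) (fun mu => ~ vec_eq mu xs ys) nu)
       (assign omega ys a)).
Proof.
 split.
 - intros HL a D nu Hrel Hveq. apply ode_rel_sol in Hrel. destruct Hrel as (T1 & phi1 & S1 & E1).
   set (b := fun k => omega (Var (nth k ys O))).
   assert (Key : forall T psi, sol (fun _ => True) (assign omega ys a) T psi -> forall t, 0 <= t <= T -> holds I (psi t) P).
   { intros T psi Sp t Ht. assert (Sr := sol_restrict _ _ _ _ _ Sp (conj (proj1 Ht) (proj2 Ht))).
     assert (Sy := sol_shiftY _ (fun _ => True) _ _ _ b Sr ltac:(intros; exact Logic.I)).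
     unfold b in Sy. rewrite assign_back in Sy.
     assert (Hrel : ode_rel I xs fs (fun _ => True) omega (assign (psi t) ys b)).
     { apply ode_rel_sol. exists t. eexists. split; [exact Sy|reflexivity]. }
     assert (Hh := HL _ Hrel). simpl in Hh. refine (proj1 (holds_noY (assign (psi t) ys b) (psi t) _) Hh).
     intros i Hi. rewrite assign_setl, setl_notin; auto. intros Hc. apply in_map_iff in Hc. destruct Hc as (y & E & Hy). inversion E; subst; auto. }
   assert (S1' := sol_weaken D (fun _ => True) _ _ _ ltac:(intros; exact Logic.I) S1).
   assert (HPnu : holds I nu P). { rewrite <- E1. apply (Key T1 phi1 S1'). destruct S1 as (HT1 & _). lra. }
   split; auto.
   destruct (sol_exists nu) as (T2 & phi2 & HT2 & S2).
   destruct (Hevolve nu) as (k & Hk & Hne).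
   destruct (sol_leave _ _ _ _ k S2 HT2 Hk Hne) as (h & Hh & HhT & Hleave).
   exists (phi2 h). split.
   + apply ode_rel_sol. exists h, phi2. split; auto.
     apply sol_weaken with (fun _ => True).
     * intros u Hu _. left.
       assert (S2r := sol_restrict _ _ _ _ u S2 ltac:(lra)).
       rewrite <- E1 in S2r.
       assert (Sc := sol_concat _ _ _ _ _ _ S1' S2r).
       assert (Hh2 := Key _ _ Sc (T1 + u) ltac:(destruct S1 as (HT1 & _); lra)).
       simpl in Hh2. destruct (Rle_dec (T1 + u) T1).
       -- refine (proj1 (holds_noY _ (phi2 u) _) Hh2). intros i _.
          assert (u = 0) by lra. subst u. rewrite Rplus_0_r.
          destruct S2r as (_ & H0 & _). rewrite H0 by apply Var_not_dvar. auto.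
       -- replace (T1 + u - T1) with u in Hh2 by ring. auto.
     * apply sol_restrict with T2; auto. lra.
   + intros Hv. specialize (Hv k Hk). 
     destruct S2 as (_ & H0 & H). destruct (H h ltac:(lra)) as (_ & _ & A3 & _).
     rewrite (A3 (Var (nth k ys O))) in Hv by (apply yk_notin; lia). rewrite (H0 (Var (nth k ys O))) in Hv by apply Var_not_dvar.
     rewrite <- (Hveq k Hk) in Hv. apply (Hleave h ltac:(lra)). exact Hv.
 - intros HR nu Hrel. apply ode_rel_sol in Hrel. destruct Hrel as (T & phi & S & E). subst nu.
   destruct (Classical_Prop.classic (holds I (phi T) P)) as [|Hneg]; auto. exfalso.
   pose proof S as S0. destruct S0 as (HT & H0 & H).
   set (B := fun t => 0 <= t <= T /\ forall u, 0 <= u < t -> holds I (phi u) P).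
   destruct (completeness B) as (s & Hlub).
   { exists T. intros t (Ht & _). lra. }
   { exists 0. split. lra. intros u Hu. lra. }
   destruct Hlub as [Hub Hleast].
   assert (Hs0 : 0 <= s) by (apply Hub; split; [lra|intros; lra]).
   assert (HsT : s <= T) by (apply Hleast; intros t (Ht & _); lra).
   assert (Hi : forall u, 0 <= u < s -> holds I (phi u) P).
   { intros u Hu. destruct (Classical_Prop.classic (holds I (phi u) P)) as [|Hn]; auto. exfalso.
     assert (s <= u). { apply Hleast. intros t (Ht & Hp). destruct (Rle_dec t u); auto. exfalso. apply Hn. apply Hp. lra. }
     lra. }
   assert (Hiii : forall del, 0 < del -> exists u, s <= u <= T /\ u < s + del /\ ~ holds I (phi u) P).
   { intros del Hdel. apply Classical_Prop.NNPP. intros Hn.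
     destruct (Req_dec s T). { apply Hn. exists T. repeat split; try lra. auto. }
     set (t' := Rmin (s + del/2) T).
     assert (Ht'1 : t' <= s + del/2) by apply Rmin_l. assert (Ht'2 : t' <= T) by apply Rmin_r.
     assert (s < t') by (unfold t'; apply Rmin_glb_lt; lra).
     assert (B t'). { split. split; lra. intros u Hu. destruct (Rlt_dec u s). apply Hi; lra.
       apply Classical_Prop.NNPP. intros Hnp. apply Hn. exists u. repeat split; auto; lra. }
     specialize (Hub t' H3). lra. }
   set (a := fun k => phi s (xv k)).
   set (phi' := fun t => assign (phi t) ys a).
   assert (S' : sol (fun _ => True) (assign omega ys a) T phi').
   { apply (sol_shiftY (fun _ => True)); auto. }
   assert (NotY : forall st i, ~ In i ys -> assign st ys a (Var i) = st (Var i)).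
   { intros st i Hi0. rewrite assign_setl, setl_notin; auto. intros Hc. apply in_map_iff in Hc. destruct Hc as (y & E & Hy). inversion E; subst; auto. }
   assert (HP' : forall u, holds I (phi' u) P <-> holds I (phi u) P).
   { intros u. apply holds_noY. intros i Hi0. apply NotY; auto. }
   assert (Veq : vec_eq (phi' s) xs ys).
   { intros k Hk. unfold phi'. rewrite NotY.
     rewrite assign_setl. replace (Var (nth k ys O)) with (nth k (map Var ys) (Var O)) by apply map_nth.
     rewrite setl_nth. reflexivity. apply Injective_map_NoDup; auto. intros x y Ex; inversion Ex; auto.
     rewrite length_map; lia.
     intros Hc. destruct (Hfresh _ Hc) as (Hn & _). apply Hn. apply nth_In; auto. }
   set (D := fun st => holds I st P \/ vec_eq st xs ys).
   assert (SD : sol D (assign omega ys a) s phi').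
   { apply sol_weaken with (fun _ => True). intros t Ht _. destruct (Req_dec t s).
     subst t. right; auto. left. apply HP'. apply Hi. lra.
     apply sol_restrict with T; auto. }
   assert (Hrel : ode_rel I xs fs D (assign omega ys a) (phi' s)).
   { apply ode_rel_sol. exists s, phi'. split; [exact SD|reflexivity]. }
   destruct (HR a (phi' s) Hrel Veq) as (HPs & Hdia).
   apply HP' in HPs.
   destruct Hdia as (mu & Hrel2 & Hnv). apply ode_rel_sol in Hrel2. destruct Hrel2 as (T2 & chi & Sc & Ec).
   assert (HT2 : 0 < T2).
   { destruct Sc as (HT2 & Hc0 & _). destruct (Req_dec T2 0); [|lra]. exfalso. subst T2. apply Hnv. rewrite <- Ec.
     intros k Hk. rewrite !Hc0 by apply Var_not_dvar. apply Veq; auto. }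
   destruct (Hiii 1 ltac:(lra)) as (u0 & Hu0 & _ & Hnu0).
   assert (HsT' : s < T). { destruct (Req_dec u0 s). subst u0. contradiction. lra. }
   assert (Sh := sol_shift _ _ _ _ s S' ltac:(lra)).
   destruct (sol_unique _ _ _ _ _ _ _ _ Sh Sc ltac:(lra) HT2) as (h & Hh & HhT & HhT2 & Eq).
   { intros i. rewrite Rplus_0_r. destruct Sc as (_ & Hc0 & _). rewrite Hc0 by apply Var_not_dvar. auto. }
   destruct (Hevolve (phi' s)) as (k & Hk & Hne).
   destruct (sol_leave _ _ _ _ k Sc HT2 Hk Hne) as (h' & Hh' & Hh'T & Hleave).
   destruct (Hiii (Rmin h h') ltac:(apply Rmin_pos; auto)) as (u & Hu & Hud & Hnu).
   assert (Hm1 := Rmin_l h h'). assert (Hm2 := Rmin_r h h').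
   assert (Hus : u <> s) by (intros E; subst u; contradiction).
   set (t := u - s).
   destruct Sc as (HT2' & Hc0 & Hc). destruct (Hc t ltac:(unfold t; lra)) as (_ & HD & Hc3 & _).
   destruct HD as [HPc|HVc].
   + apply Hnu. apply HP'. replace u with (s + t) by (unfold t; ring).
     refine (proj1 (holds_noY (chi t) _ _) HPc). intros i _. symmetry. apply Eq. unfold t; lra.
   + apply (Hleave t ltac:(unfold t; lra)). unfold xv. rewrite (HVc k Hk).
     rewrite (Hc3 (Var (nth k ys O))) by (apply yk_notin; lia). rewrite (Hc0 (Var (nth k ys O))) by apply Var_not_dvar. symmetry. apply Veq; auto.
Qed.
End Main.


Theorem lemma5p5
  (Sym : Type) (Hfin : exists l : list Sym, forall s, In s l)
  (ar : Sym -> nat) (I : Sym -> (nat -> R) -> R)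
  (HI : forall s, smooth_k (ar s) (I s))
  (xs : list nat) (fs : list (term Sym)) (P : fml Sym) (ys : list nat)
  (Hxs : NoDup xs) (Hlen : length fs = length xs)
  (Hfdf : forall t, In t fs -> dfree t = true)
  (Hevolve : forall st : state, exists k, (k < length xs)%nat /\
               eval I st (nth k fs (TConst Sym 0%Q)) <> 0)
  (HP : semianalytic P = true)
  (Hys : NoDup ys) (Hylen : length ys = length xs)
  (Hfresh : forall y, In y ys ->
     ~ In y xs /\
     (forall t, In t fs -> occurs (Var y) t = false) /\
     occurs_fml (Var y) P = false)
  (omega : state) :
  box (ode_rel I xs fs (fun _ => True)) (fun nu => holds I nu P) omega
  <->
  (forall a : nat -> R,
     let D := fun st => holds I st P \/ vec_eq st xs ys in
     box (ode_rel I xs fs D)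
       (fun nu => vec_eq nu xs ys ->
          holds I nu P /\
          diamond (ode_rel I xs fs D) (fun mu => ~ vec_eq mu xs ys) nu)
       (assign omega ys a)).
Proof.
  intros. apply (main_iff Sym ar I HI xs fs P ys Hxs Hlen Hfdf HP Hys Hfresh Hevolve Hylen omega).
Qed.
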